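(* Consider the SEIRUC system \[ \begin{aligned} S'(t)&=\Lambda-\frac{\beta S(t)}{N(t)}\bigl(I(t)+U(t)+R(t)\bigr)-\delta S(t),\\ E'(t)&=\frac{\beta S(t)}{N(t)}\bigl(I(t)+U(t)+R(t)\bigr)-(a+\delta_1+c_1)E(t),\\ I'(t)&=aE(t)-(\gamma+\delta_2+c_2)I(t),\\ R'(t)&=\gamma q I(t)-(\delta_3+c_3)R(t)+\eta U(t),\\ U'(t)&=\gamma(1-q)I(t)-(\delta_4+c_4)U(t)-\eta U(t),\\ C'(t)&=c_1E(t)+c_2I(t)+c_3R(t)+c_4U(t)-\delta_5C(t), \end{aligned} \] where $N(t)=S(t)+E(t)+I(t)+R(t)+U(t)+C(t)$. Let $\theta_1=a+\delta_1+c_1$, $\theta_2=\gamma+\delta_2+c_2$, $\theta_3=\delta_3+c_3$, $\theta_4=\delta_4+c_4+\eta$, $\mathcal{P}=\gamma(1-q)(\eta+\theta_3)+\theta_4(\theta_3+q\gamma)$, and \[ \mathcal{R}_0=\frac{a\beta\Lambda\mathcal{P}}{N\delta\theta_1\theta_2\theta_3\theta_4}, \] where $N=\Lambda/\delta$ is the total population at the disease-free equilibrium (so $\mathcal{R}_0=\frac{a\beta\mathcal{P}}{\theta_1\theta_2\theta_3\theta_4}$). Then the disease-free equilibrium $\mathcal{E}_0=(\Lambda/\delta,0,0,0,0,0)$ is locally asymptotically stable if $\mathcal{R}_0<1$ and unstable if $\mathcal{R}_0>1$.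
   Context: All parameters $\Lambda,\beta,\delta,a,\gamma,\eta,\delta_1,\dots,\delta_5,c_1,\dots,c_4$ are positive constants and $q\in[0,1]$. $\mathcal{R}_0$ is the basic reproduction number, obtained as the spectral radius of the next-generation matrix. *)

(* Defs.v *)
From Stdlib Require Import Reals.
From Coquelicot Require Import Coquelicot.
Open Scope R_scope.

Record params := mkParams {
  Lambda : R; beta : R; delta : R; a : R; gamma : R; eta : R; q : R;
  delta1 : R; delta2 : R; delta3 : R; delta4 : R; delta5 : R;
  c1 : R; c2 : R; c3 : R; c4 : R }.

Definition admissible (p : params) : Prop :=
  0 < Lambda p /\ 0 < beta p /\ 0 < delta p /\ 0 < a p /\ 0 < gamma p /\
  0 < eta p /\ 0 < delta1 p /\ 0 < delta2 p /\ 0 < delta3 p /\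
  0 < delta4 p /\ 0 < delta5 p /\ 0 < c1 p /\ 0 < c2 p /\ 0 < c3 p /\
  0 < c4 p /\ 0 <= q p <= 1.

Record state := mkState { sS : R; sE : R; sI : R; sR : R; sU : R; sC : R }.

Definition totalN (x : state) : R :=
  sS x + sE x + sI x + sR x + sU x + sC x.

Definition force (p : params) (x : state) : R :=
  beta p * sS x / totalN x * (sI x + sU x + sR x).

Definition fS (p : params) (x : state) : R :=
  Lambda p - force p x - delta p * sS x.
Definition fE (p : params) (x : state) : R :=
  force p x - (a p + delta1 p + c1 p) * sE x.
Definition fI (p : params) (x : state) : R :=
  a p * sE x - (gamma p + delta2 p + c2 p) * sI x.
Definition fR (p : params) (x : state) : R :=
  gamma p * q p * sI x - (delta3 p + c3 p) * sR x + eta p * sU x.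
Definition fU (p : params) (x : state) : R :=
  gamma p * (1 - q p) * sI x - (delta4 p + c4 p) * sU x - eta p * sU x.
Definition fC (p : params) (x : state) : R :=
  c1 p * sE x + c2 p * sI x + c3 p * sR x + c4 p * sU x - delta5 p * sC x.

Definition theta1 (p : params) := a p + delta1 p + c1 p.
Definition theta2 (p : params) := gamma p + delta2 p + c2 p.
Definition theta3 (p : params) := delta3 p + c3 p.
Definition theta4 (p : params) := delta4 p + c4 p + eta p.
Definition PP (p : params) :=
  gamma p * (1 - q p) * (eta p + theta3 p) + theta4 p * (theta3 p + q p * gamma p).
Definition Ndfe (p : params) := Lambda p / delta p.
Definition basic_R0 (p : params) :=
  a p * beta p * Lambda p * PP p /
  (Ndfe p * delta p * theta1 p * theta2 p * theta3 p * theta4 p).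

Definition E0 (p : params) : state := mkState (Lambda p / delta p) 0 0 0 0 0.

Definition dist_st (x y : state) : R :=
  Rmax (Rabs (sS x - sS y)) (Rmax (Rabs (sE x - sE y)) (Rmax (Rabs (sI x - sI y))
  (Rmax (Rabs (sR x - sR y)) (Rmax (Rabs (sU x - sU y)) (Rabs (sC x - sC y)))))).

Definition is_solution (p : params) (x : R -> state) : Prop :=
  (forall t, 0 < t ->
     is_derive (fun s => sS (x s)) t (fS p (x t)) /\
     is_derive (fun s => sE (x s)) t (fE p (x t)) /\
     is_derive (fun s => sI (x s)) t (fI p (x t)) /\
     is_derive (fun s => sR (x s)) t (fR p (x t)) /\
     is_derive (fun s => sU (x s)) t (fU p (x t)) /\
     is_derive (fun s => sC (x s)) t (fC p (x t))) /\
  (forall eps, 0 < eps -> exists d, 0 < d /\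
     forall t, 0 <= t < d -> dist_st (x t) (x 0) < eps).

Definition lyapunov_stable (p : params) (e : state) : Prop :=
  forall eps, 0 < eps -> exists d, 0 < d /\
    forall x, is_solution p x -> dist_st (x 0) e < d ->
      forall t, 0 <= t -> dist_st (x t) e < eps.

Definition locally_attractive (p : params) (e : state) : Prop :=
  exists d, 0 < d /\
    forall x, is_solution p x -> dist_st (x 0) e < d ->
      forall eps, 0 < eps -> exists T, forall t, T <= t -> dist_st (x t) e < eps.

Definition locally_asymptotically_stable (p : params) (e : state) : Prop :=
  lyapunov_stable p e /\ locally_attractive p e.

Definition unstable (p : params) (e : state) : Prop := ~ lyapunov_stable p e.

(* Main.v *)
Require Import Defs.
From Stdlib Require Import Reals Lra Lia Classical.
From Coquelicot Require Import Coquelicot.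
Require Import Defs.
Open Scope R_scope.

Lemma ball_R (x y e : R) : ball x e y <-> Rabs (y - x) < e.
Proof. unfold ball; simpl; unfold AbsRing_ball, abs, minus, plus, opp; simpl. tauto. Qed.

Definition ctn (f : R -> R) (t : R) :=
  forall e, 0 < e -> exists d, 0 < d /\ forall s, Rabs (s - t) < d -> Rabs (f s - f t) < e.

Lemma ctn_continuous f t : ctn f t -> continuous f t.
Proof.
  intros H. apply filterlim_locally. intros [e He]. simpl.
  destruct (H e He) as [d [Hd Hs]]. exists (mkposreal d Hd). intros y Hy.
  apply ball_R. apply Hs. apply ball_R in Hy. exact Hy.
Qed.

Lemma continuous_ctn f t : continuous f t -> ctn f t.
Proof.
  intros H e He. apply filterlim_locally with (eps := mkposreal e He) in H.
  destruct H as [[d Hd] Hs]. exists d. split. exact Hd. intros s Hs'.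
  apply ball_R. apply Hs. apply ball_R. exact Hs'.
Qed.

Lemma derive_ctn (f : R -> R) (t l : R) : is_derive f t l -> ctn f t.
Proof. intros H. apply continuous_ctn. apply (ex_derive_continuous (K:=R_AbsRing) (V:=R_NormedModule)). exists l; exact H. Qed.

Lemma CI (a : R) (Q : R -> Prop) :
  (exists d, 0 < d /\ forall s, a <= s < a + d -> Q s) ->
  (forall c, a < c -> (forall s, a <= s < c -> Q s) ->
     exists d, 0 < d /\ forall s, a <= s < c + d -> Q s) ->
  forall t, a <= t -> Q t.
Proof.
  intros [d0 [Hd0 H0]] Hstep t0 Ht0.
  destruct (classic (Q t0)) as [?|Hn]; auto. exfalso.
  assert (Ht: a + d0 <= t0).
  { destruct (Rle_dec (a+d0) t0); auto. exfalso; apply Hn; apply H0; lra. }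
  set (E := fun c => a <= c /\ c <= t0 /\ forall s, a <= s < c -> Q s).
  assert (Hb : bound E). { exists t0. intros c [_ [Hc _]]. exact Hc. }
  assert (He : exists x, E x). { exists (a + d0). split; [lra|split; [lra|]]. intros; apply H0; lra. }
  destruct (completeness E Hb He) as [m [Hub Hlub]].
  assert (Hm1 : a + d0 <= m). { apply Hub. split; [lra|split;[lra|]]. intros; apply H0; lra. }
  assert (Hm2 : m <= t0). { apply Hlub. intros c [_ [Hc _]]. exact Hc. }
  assert (HQ : forall s, a <= s < m -> Q s).
  { intros s Hs. destruct (classic (exists c, E c /\ s < c)) as [[c [[_ [_ Hc]] Hsc]]|Hno].
    - apply Hc; lra.
    - exfalso. assert (m <= s). { apply Hlub. intros c Ec. destruct (Rle_dec c s); auto.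
        exfalso; apply Hno; exists c; split; auto; lra. } lra. }
  destruct (Hstep m ltac:(lra) HQ) as [d [Hd Hd']].
  destruct (Rlt_le_dec t0 (m + d)). apply Hn, Hd'. lra.
  assert (m + d/2 <= m). { apply Hub. split; [lra|split;[lra|]]. intros; apply Hd'; lra. } lra.
Qed.

Definition DL (f : R -> R) (s g : R) :=
  forall e, 0 < e -> exists d, 0 < d /\ forall h, 0 < h < d -> f (s + h) <= f s + h * g + h * e.

Lemma DL_plus f1 f2 s g1 g2 : DL f1 s g1 -> DL f2 s g2 -> DL (fun t => f1 t + f2 t) s (g1 + g2).
Proof.
  intros H1 H2 e He. destruct (H1 (e/2) ltac:(lra)) as [d1 [Hd1 K1]].
  destruct (H2 (e/2) ltac:(lra)) as [d2 [Hd2 K2]].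
  exists (Rmin d1 d2); split. apply Rmin_pos; auto.
  intros h Hh. assert (h < d1) by (eapply Rlt_le_trans; [apply Hh|apply Rmin_l]).
  assert (h < d2) by (eapply Rlt_le_trans; [apply Hh|apply Rmin_r]).
  specialize (K1 h ltac:(lra)). specialize (K2 h ltac:(lra)).
  assert (h*(e/2) + h*(e/2) = h*e) by field. assert (h*(g1+g2) = h*g1+h*g2) by ring. lra.
Qed.

Lemma DL_scal f s g c : 0 <= c -> DL f s g -> DL (fun t => c * f t) s (c * g).
Proof.
  intros Hc H e He. destruct (H (e / (c + 1))) as [d [Hd K]].
  { apply Rdiv_lt_0_compat; lra. }
  exists d; split; auto. intros h Hh. specialize (K h Hh).
  assert (c * (e / (c+1)) <= e).
  { unfold Rdiv. rewrite <- Rmult_assoc. apply Rmult_le_reg_r with (c+1). lra.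
    rewrite Rmult_assoc, Rinv_l by lra. nra. }
  nra.
Qed.

Lemma DL_mono f s g g' : g <= g' -> DL f s g -> DL f s g'.
Proof. intros Hg H e He. destruct (H e He) as [d [Hd K]]. exists d; split; auto.
  intros h Hh. specialize (K h Hh). nra. Qed.

Lemma DL_ext f f' s g : (forall t, f t = f' t) -> DL f s g -> DL f' s g.
Proof. intros E H e He. destruct (H e He) as [d [Hd K]]. exists d; split; auto.
  intros h Hh. rewrite <- !E. auto. Qed.

Lemma DL_derive f s l : is_derive f s l -> DL f s l.
Proof.
  intros H e He. apply is_derive_Reals in H. destruct (H e He) as [[d Hd] K].
  exists d; split; auto. intros h Hh. simpl in *.
  assert (Hh0 : h <> 0) by lra. assert (Ha : Rabs h < d) by (rewrite Rabs_right; lra).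
  specialize (K h Hh0 Ha). apply Rabs_def2 in K. destruct K as [K1 K2].
  assert (E: f (s + h) - f s = h * ((f (s + h) - f s) / h)) by (field; lra).
  nra.
Qed.

Lemma DL_abs y s l dd : is_derive y s l -> dd <= 0 ->
  DL (fun t => Rabs (y t)) s (dd * Rabs (y s) + Rabs (l - dd * y s)).
Proof.
  intros H Hdd e He. apply is_derive_Reals in H. destruct (H e He) as [[d Hd] K].
  exists (Rmin d (1 / (1 - dd))); split.
  { apply Rmin_pos; auto. apply Rdiv_lt_0_compat; lra. }
  intros h Hh. simpl in *.
  assert (h < d) by (eapply Rlt_le_trans; [apply Hh|apply Rmin_l]).
  assert (h < 1/(1-dd)) by (eapply Rlt_le_trans; [apply Hh|apply Rmin_r]).
  assert (Hh1 : 0 <= 1 + h * dd).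
  { assert (h * (1 - dd) < 1).
    { apply Rmult_lt_reg_r with (/(1-dd)). apply Rinv_0_lt_compat; lra.
      rewrite Rmult_assoc, Rinv_r by lra. lra. } nra. }
  assert (Hh0 : h <> 0) by lra. assert (Ha : Rabs h < d) by (rewrite Rabs_right; lra).
  specialize (K h Hh0 Ha). set (r := (y (s + h) - y s) / h - l) in K.
  assert (E: y (s + h) = (1 + h * dd) * y s + h * (l - dd * y s) + h * r) by (unfold r; field; lra).
  rewrite E.
  eapply Rle_trans. apply Rabs_triang.
  eapply Rle_trans. apply Rplus_le_compat_r. apply Rabs_triang.
  rewrite !Rabs_mult. rewrite (Rabs_right (1 + h*dd)) by lra. rewrite (Rabs_right h) by lra.
  assert (Rabs r * h <= e * h) by (apply Rmult_le_compat_r; lra). nra.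
Qed.

Lemma DM (f : R -> R) (a b L : R) : a <= b ->
  (forall e, 0 < e -> exists d, 0 < d /\ forall s, a <= s < a + d -> f s <= f a + e) ->
  (forall c, a < c <= b -> ctn f c) ->
  (forall s, a < s < b -> DL f s (- L)) ->
  f b <= f a - L * (b - a).
Proof.
  intros Hab Hr Hc Hd.
  assert (Main : forall e, 0 < e -> f b <= f a - L * (b - a) + e * (b - a) + e).
  { intros e He.
    set (bd := fun s => f a - L * (s - a) + e * (s - a) + e).
    cut (forall t, a <= t -> t <= b -> f t <= bd t).
    { intros HH; apply HH; lra. }
    apply (CI a (fun s => s <= b -> f s <= bd s)).
    - destruct (Hr (e/2) ltac:(lra)) as [d [Hd0 Hd1]].
      exists (Rmin d (e / (2 * (Rabs L + 1)))). split.
      { apply Rmin_pos; auto. apply Rdiv_lt_0_compat; [lra| ]. pose proof (Rabs_pos L); lra. }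
      intros s Hs _. unfold bd.
      assert (s < a + d) by (pose proof (Rmin_l d (e / (2 * (Rabs L + 1)))); lra).
      assert (Hs2 : s - a < e / (2 * (Rabs L + 1))) by (pose proof (Rmin_r d (e / (2 * (Rabs L + 1)))); lra).
      specialize (Hd1 s ltac:(lra)).
      assert (L * (s - a) <= e / 2).
      { pose proof (Rabs_pos L). pose proof (Rle_abs L).
        assert ((s - a) * (2 * (Rabs L + 1)) <= e).
        { apply Rlt_le. apply Rmult_lt_reg_r with (/ (2 * (Rabs L + 1))).
          apply Rinv_0_lt_compat; lra. rewrite Rmult_assoc, Rinv_r by lra. lra. }
        nra. }
      nra.
    - intros c Hac Hbelow.
      destruct (Rlt_le_dec b c) as [Hbc|Hcb].
      { exists 1. split; [lra|]. intros s Hs Hsb. apply Hbelow; lra. }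
      assert (Qc : f c <= bd c).
      { apply Rnot_lt_le. intros Hlt.
        set (g := f c - bd c).
        destruct (Hc c ltac:(lra) (g/2) ltac:(unfold g; lra)) as [d [Hd0 Hd1]].
        set (s := Rmax a (c - Rmin d (g / (2 * (Rabs (L - e) + 1))) / 2)).
        assert (Hm : 0 < Rmin d (g / (2 * (Rabs (L - e) + 1)))).
        { apply Rmin_pos; auto. apply Rdiv_lt_0_compat. unfold g; lra. pose proof (Rabs_pos (L - e)); lra. }
        pose proof (Rmin_l d (g / (2 * (Rabs (L - e) + 1)))).
        pose proof (Rmin_r d (g / (2 * (Rabs (L - e) + 1)))).
        assert (Hs1 : a <= s) by apply Rmax_l.
        assert (Hs2 : s < c).
        { unfold s. apply Rmax_lub_lt; lra. }
        assert (Hs3 : c - s <= Rmin d (g / (2 * (Rabs (L - e) + 1))) / 2).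
        { unfold s. pose proof (Rmax_r a (c - Rmin d (g / (2 * (Rabs (L - e) + 1))) / 2)). lra. }
        specialize (Hd1 s ltac:(rewrite Rabs_left; lra)).
        specialize (Hbelow s ltac:(lra) ltac:(lra)).
        apply Rabs_def2 in Hd1.
        assert (Hx : (L - e) * (c - s) <= g / 2).
        { pose proof (Rabs_pos (L - e)). pose proof (Rle_abs (L - e)).
          assert ((c - s) * (2 * (Rabs (L - e) + 1)) <= g).
          { apply Rmult_le_reg_r with (/ (2 * (Rabs (L - e) + 1))).
            apply Rinv_0_lt_compat; lra. rewrite Rmult_assoc, Rinv_r by lra.
            unfold Rdiv in *. lra. }
          nra. }
        assert (bd s - bd c = (L - e) * (c - s)) by (unfold bd; ring). unfold g in *. lra. }
      destruct (Req_dec c b) as [Ecb|Ncb].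
      { exists 1; split; [lra|]. intros s Hs Hsb.
        destruct (Rlt_le_dec s c). apply Hbelow; lra. replace s with c by lra. intros; exact Qc. }
      destruct (Hd c ltac:(lra) e He) as [d [Hd0 Hd1]].
      exists d; split; auto. intros s Hs Hsb.
      destruct (Rlt_le_dec s c). apply Hbelow; lra.
      destruct (Req_dec s c) as [->|Nsc]. exact Qc.
      specialize (Hd1 (s - c) ltac:(lra)). replace (c + (s - c)) with s in Hd1 by ring.
      unfold bd in *. nra. }
  apply Rnot_lt_le. intros Hlt.
  set (g := f b - (f a - L * (b - a))).
  specialize (Main (g / (2 * (b - a + 1))) ltac:(apply Rdiv_lt_0_compat; unfold g; lra)).
  assert (g / (2 * (b - a + 1)) * (b - a + 1) = g / 2) by (field; lra).
  unfold g in *. nra.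
Qed.

Definition rctn (f : R -> R) (a : R) :=
  forall e, 0 < e -> exists d, 0 < d /\ forall s, a <= s < a + d -> Rabs (f s - f a) < e.

Lemma DL_derive_le f s l L : is_derive f s l -> l <= - L -> DL f s (- L).
Proof. intros H Hl. apply DL_mono with l; auto. apply DL_derive; auto. Qed.

Lemma DM_deriv (f : R -> R) (a b L : R) : a <= b ->
  rctn f a ->
  (forall s, a < s <= b -> exists l, is_derive f s l /\ (s < b -> l <= - L)) ->
  f b <= f a - L * (b - a).
Proof.
  intros Hab Hr Hd. apply DM; auto.
  - intros e He. destruct (Hr e He) as [d [Hd0 Hd1]]. exists d; split; auto.
    intros s Hs. specialize (Hd1 s Hs). apply Rabs_def2 in Hd1. lra.
  - intros c Hc. destruct (Hd c Hc) as [l [Hl _]]. eapply derive_ctn; eauto.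
  - intros s Hs. destruct (Hd s ltac:(lra)) as [l [Hl Hl2]]. apply DL_derive_le with l; auto. apply Hl2; lra.
Qed.

Lemma rctn_of_ctn f a : ctn f a -> rctn f a.
Proof. intros H e He. destruct (H e He) as [d [Hd K]]. exists d; split; auto.
  intros s Hs. apply K. rewrite Rabs_right; lra. Qed.

Lemma barrier (y : R -> R) (lo : R) :
  rctn y 0 ->
  (forall t, 0 < t -> exists l, is_derive y t l /\ (y t < lo -> 0 <= l)) ->
  lo <= y 0 -> forall t, 0 <= t -> lo <= y t.
Proof.
  intros Hr Hd H0 t0 Ht0. apply Rnot_lt_le. intros Hlt.
  assert (Ht0' : 0 < t0). { destruct (Req_dec t0 0) as [->|]; lra. }
  set (E := fun c => 0 <= c <= t0 /\ lo <= y c).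
  assert (Hb : bound E). { exists t0. intros c [[_ Hc] _]. exact Hc. }
  assert (He : exists x, E x). { exists 0. split; lra. }
  destruct (completeness E Hb He) as [m [Hub Hlub]].
  assert (Hm0 : 0 <= m). { apply Hub. split; lra. }
  assert (Hmt : m <= t0). { apply Hlub. intros c [[_ Hc] _]. exact Hc. }
  assert (Hym : lo <= y m).
  { destruct (Req_dec m 0) as [->|Hm]; auto.
    apply Rnot_lt_le. intros Hy.
    destruct (Hd m ltac:(lra)) as [l [Hl _]]. apply derive_ctn in Hl.
    destruct (Hl (lo - y m) ltac:(lra)) as [d [Hd0 Hd1]].
    assert (m <= m - d/2).
    { apply Hlub. intros c [[Hc1 Hc2] Hc3]. assert (c <= m) by (apply Hub; split; auto; lra).
      apply Rnot_lt_le. intros Hc. specialize (Hd1 c ltac:(rewrite Rabs_left1; lra)).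
      apply Rabs_def2 in Hd1. lra. }
    lra. }
  assert (Hmt' : m < t0). { destruct (Req_dec m t0) as [->|]; lra. }
  assert (Hafter : forall s, m < s <= t0 -> y s < lo).
  { intros s Hs. apply Rnot_le_lt. intros Hs2. assert (s <= m) by (apply Hub; split; auto; lra). lra. }
  assert (HD := DM_deriv (fun t => - y t) m t0 0 ltac:(lra)).
  assert (- y t0 <= - y m - 0 * (t0 - m)).
  { apply HD.
    - destruct (Req_dec m 0) as [->|Hm].
      + intros e He0. destruct (Hr e He0) as [d [Hd0 Hd1]]. exists d; split; auto.
        intros s Hs. rewrite <- Rabs_Ropp. replace (- (- y s - - y 0)) with (y s - y 0) by ring. auto.
      + destruct (Hd m ltac:(lra)) as [l [Hl _]]. apply derive_ctn in Hl.
        intros e He0. destruct (Hl e He0) as [d [Hd0 Hd1]]. exists d; split; auto.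
        intros s Hs. rewrite <- Rabs_Ropp. replace (- (- y s - - y m)) with (y s - y m) by ring.
        apply Hd1. rewrite Rabs_right; lra.
    - intros s Hs. destruct (Hd s ltac:(lra)) as [l [Hl Hl2]]. exists (- l). split.
      + apply (is_derive_opp y s l Hl).
      + intros _. specialize (Hl2 (Hafter s Hs)). lra. }
  lra.
Qed.

Lemma exp_le x y : x <= y -> exp x <= exp y.
Proof. intros H. destruct (Req_dec x y) as [->|]; [lra|]. left; apply exp_increasing; lra. Qed.

Definition lipG (G : (nat -> R) -> nat -> R) (L : R) :=
  forall v w i, (i <= 5)%nat -> Rabs (G v i - G w i) <= L * sum_f_R0 (fun j => Rabs (v j - w j)) 5.

Fixpoint pic (G : (nat -> R) -> nat -> R) (x0 : nat -> R) (n : nat) : R -> nat -> R :=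
  match n with
  | O => fun _ => x0
  | S m => fun t i => x0 i + RInt (fun s => G (pic G x0 m s) i) 0 t
  end.

Lemma sum_ctn (X : R -> nat -> R) t N :
  (forall j, (j <= N)%nat -> ctn (fun s => X s j) t) ->
  forall e, 0 < e -> exists d, 0 < d /\ forall s, Rabs (s - t) < d ->
    sum_f_R0 (fun j => Rabs (X s j - X t j)) N < e.
Proof.
  induction N; intros H e He.
  - destruct (H 0%nat (le_n _) e He) as [d [Hd K]]. exists d; split; auto.
  - destruct (IHN (fun j Hj => H j (le_S _ _ Hj)) (e/2) ltac:(lra)) as [d1 [Hd1 K1]].
    destruct (H (S N) (le_n _) (e/2) ltac:(lra)) as [d2 [Hd2 K2]].
    exists (Rmin d1 d2); split. apply Rmin_pos; auto.
    intros s Hs. simpl.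
    specialize (K1 s ltac:(eapply Rlt_le_trans; [apply Hs|apply Rmin_l])).
    specialize (K2 s ltac:(eapply Rlt_le_trans; [apply Hs|apply Rmin_r])). lra.
Qed.

Lemma G_ctn G L (X : R -> nat -> R) t : lipG G L -> 0 < L ->
  (forall j, (j <= 5)%nat -> ctn (fun s => X s j) t) ->
  forall i, (i <= 5)%nat -> ctn (fun s => G (X s) i) t.
Proof.
  intros HL L0 HX i Hi e He.
  destruct (sum_ctn X t 5 HX (e / L) ltac:(apply Rdiv_lt_0_compat; lra)) as [d [Hd K]].
  exists d; split; auto. intros s Hs. specialize (K s Hs).
  eapply Rle_lt_trans. apply HL; auto.
  apply Rmult_lt_reg_r with (/ L). apply Rinv_0_lt_compat; lra.
  replace (e * / L) with (e / L) by reflexivity.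
  rewrite (Rmult_comm L), Rmult_assoc, Rinv_r by lra. lra.
Qed.

Lemma RInt_deriv (g : R -> R) : (forall s, ctn g s) ->
  forall t, is_derive (fun s => RInt g 0 s) t (g t).
Proof.
  intros Hg t. apply (is_derive_RInt g (fun s => RInt g 0 s) 0 t).
  - exists (mkposreal 1 Rlt_0_1). intros y _. apply (RInt_correct (V:=R_CompleteNormedModule)).
    apply (ex_RInt_continuous (V:=R_CompleteNormedModule)). intros; apply ctn_continuous; auto.
  - apply ctn_continuous; auto.
Qed.

Lemma ex_RInt_ctn (g : R -> R) a b : (forall s, ctn g s) -> ex_RInt g a b.
Proof. intros Hg. apply (ex_RInt_continuous (V:=R_CompleteNormedModule)). intros; apply ctn_continuous; auto. Qed.

Lemma ctn_const_plus f c t : ctn f t -> ctn (fun s => c + f s) t.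
Proof. intros H e He. destruct (H e He) as [d [Hd K]]. exists d; split; auto.
  intros s Hs. replace (c + f s - (c + f t)) with (f s - f t) by ring. auto. Qed.

Lemma ctn_abs f t : ctn f t -> ctn (fun s => Rabs (f s)) t.
Proof. intros H e He. destruct (H e He) as [d [Hd K]]. exists d; split; auto.
  intros s Hs. eapply Rle_lt_trans. apply Rabs_triang_inv2. auto. Qed.

Lemma ctn_minus f g t : ctn f t -> ctn g t -> ctn (fun s => f s - g s) t.
Proof. intros H1 H2 e He. destruct (H1 (e/2) ltac:(lra)) as [d1 [Hd1 K1]].
  destruct (H2 (e/2) ltac:(lra)) as [d2 [Hd2 K2]].
  exists (Rmin d1 d2); split. apply Rmin_pos; auto.
  intros s Hs. specialize (K1 s ltac:(eapply Rlt_le_trans; [apply Hs|apply Rmin_l])).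
  specialize (K2 s ltac:(eapply Rlt_le_trans; [apply Hs|apply Rmin_r])).
  replace (f s - g s - (f t - g t)) with ((f s - f t) - (g s - g t)) by ring.
  eapply Rle_lt_trans. apply Rabs_triang. rewrite Rabs_Ropp. lra. Qed.

Lemma ctn_cexp c a t : ctn (fun s => c * exp (a * s)) t.
Proof. apply (derive_ctn _ _ (c * (a * exp (a * t)))). auto_derive; auto. ring. Qed.

Lemma pic_ctn G L x0 : lipG G L -> 0 < L ->
  forall n t i, (i <= 5)%nat -> ctn (fun s => pic G x0 n s i) t.
Proof.
  intros HL L0. induction n; intros t i Hi.
  - intros e He. exists 1; split; [lra|]. intros; simpl. rewrite Rminus_eq_0, Rabs_R0; auto.
  - simpl. apply ctn_const_plus. eapply derive_ctn. apply RInt_deriv.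
    intros s. apply (G_ctn G L (pic G x0 n)); auto.
Qed.

Lemma RInt_minus' (f g : R -> R) a b : ex_RInt f a b -> ex_RInt g a b ->
  RInt (fun s => f s - g s) a b = RInt f a b - RInt g a b.
Proof. intros H1 H2. exact (RInt_minus f g a b H1 H2). Qed.

Lemma abs_RInt_bound (f g : R -> R) t : 0 <= t -> (forall s, ctn f s) -> (forall s, ctn g s) ->
  (forall s, 0 <= s <= t -> Rabs (f s) <= g s) -> Rabs (RInt f 0 t) <= RInt g 0 t.
Proof.
  intros Ht Hf Hg H. eapply Rle_trans. apply abs_RInt_le; auto. apply ex_RInt_ctn; auto.
  apply RInt_le; auto. apply ex_RInt_ctn. intros; apply ctn_abs; auto. apply ex_RInt_ctn; auto.
  intros; apply H; lra.
Qed.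

Lemma RInt_cexp c a t : 0 < a -> RInt (fun s => c * exp (a * s)) 0 t = c / a * (exp (a * t) - 1).
Proof.
  intros Ha. apply is_RInt_unique.
  replace (c / a * (exp (a * t) - 1)) with (minus ((fun s => c / a * exp (a * s)) t) ((fun s => c / a * exp (a * s)) 0)).
  apply (is_RInt_derive (V:=R_CompleteNormedModule) (fun s => c / a * exp (a * s))).
  - intros x _. auto_derive; auto. field; lra.
  - intros x _. apply ctn_continuous, ctn_cexp.
  - unfold minus, plus, opp; simpl. rewrite Rmult_0_r, exp_0. ring.
Qed.

Lemma RInt_cst (c t : R) : RInt (fun _ => c) 0 t = t * c.
Proof. rewrite RInt_const. unfold scal; simpl; unfold mult; simpl. ring. Qed.

Lemma sum_nonneg (f : nat -> R) N : (forall j, 0 <= f j) -> 0 <= sum_f_R0 f N.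
Proof. intros Hf. induction N; simpl; auto. specialize (Hf (S N)). lra. Qed.

Lemma sum_term (f : nat -> R) N i : (forall j, 0 <= f j) -> (i <= N)%nat -> f i <= sum_f_R0 f N.
Proof.
  intros Hf. induction N; intros Hi.
  - inversion Hi; subst; simpl; lra.
  - simpl. inversion Hi; subst.
    + pose proof (sum_nonneg f N Hf). lra.
    + specialize (IHN H0). specialize (Hf (S N)). lra.
Qed.

Definition Cx (G : (nat -> R) -> nat -> R) (L : R) (x0 : nat -> R) := sum_f_R0 (fun j => Rabs (G x0 j)) 5 / (12 * L).

Lemma Cx_nonneg G L x0 : 0 < L -> 0 <= Cx G L x0.
Proof. intros. unfold Cx. apply Rmult_le_pos. apply sum_nonneg; intros; apply Rabs_pos.
  left; apply Rinv_0_lt_compat; lra. Qed.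

Lemma pic_step G L x0 : lipG G L -> 0 < L ->
  forall n t i, 0 <= t -> (i <= 5)%nat ->
  Rabs (pic G x0 (S n) t i - pic G x0 n t i) <= Cx G L x0 * (/2) ^ n * exp (12 * L * t).
Proof.
  intros HL L0. pose proof (Cx_nonneg G L x0 L0) as HC.
  induction n; intros t i Ht Hi.
  - simpl. rewrite RInt_cst. replace (x0 i + t * G x0 i - x0 i) with (t * G x0 i) by ring.
    rewrite Rabs_mult, Rabs_right by lra.
    assert (HB : Rabs (G x0 i) <= sum_f_R0 (fun j => Rabs (G x0 j)) 5).
    { apply (sum_term (fun j => Rabs (G x0 j))); auto. intros; apply Rabs_pos. }
    pose proof (exp_ineq1_le (12 * L * t)).
    assert (E : sum_f_R0 (fun j => Rabs (G x0 j)) 5 = Cx G L x0 * (12 * L)) by (unfold Cx; field; lra).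
    rewrite E in HB. assert (0 <= t * Rabs (G x0 i)) by (apply Rmult_le_pos; auto; apply Rabs_pos).
    assert (t * Rabs (G x0 i) <= t * (Cx G L x0 * (12 * L))) by (apply Rmult_le_compat_l; auto).
    nra.
  - change (pic G x0 (S (S n)) t i) with (x0 i + RInt (fun s => G (pic G x0 (S n) s) i) 0 t).
    change (pic G x0 (S n) t i) with (x0 i + RInt (fun s => G (pic G x0 n s) i) 0 t).
    assert (Hc : forall m s, ctn (fun s => G (pic G x0 m s) i) s).
    { intros m s. apply (G_ctn G L (pic G x0 m)); auto. intros; apply (pic_ctn G L); auto. }
    replace (x0 i + RInt (fun s => G (pic G x0 (S n) s) i) 0 t -
      (x0 i + RInt (fun s => G (pic G x0 n s) i) 0 t)) with
      (RInt (fun s => G (pic G x0 (S n) s) i - G (pic G x0 n s) i) 0 t).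
    2:{ rewrite RInt_minus'. assert (Hr : forall a b c : R, a - b = c + a - (c + b)) by (intros; ring). apply Hr. apply ex_RInt_ctn; auto. apply ex_RInt_ctn; auto. }
    eapply Rle_trans. apply abs_RInt_bound with (g := fun s => (6 * L * Cx G L x0 * (/2) ^ n) * exp (12 * L * s)); auto.
    + intros s. apply ctn_minus; auto.
    + intros s. apply ctn_cexp.
    + intros s Hs. eapply Rle_trans. apply HL; auto.
      assert (sum_f_R0 (fun j => Rabs (pic G x0 (S n) s j - pic G x0 n s j)) 5 <=
              sum_f_R0 (fun _ => Cx G L x0 * (/2) ^ n * exp (12 * L * s)) 5).
      { apply sum_Rle. intros j Hj. apply IHn; [lra|exact Hj]. }
      rewrite sum_cte in H. simpl INR in H.
      replace (6 * L * Cx G L x0 * (/ 2) ^ n * exp (12 * L * s)) with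
        (L * (Cx G L x0 * (/ 2) ^ n * exp (12 * L * s) * (1+1+1+1+1+1))) by ring.
      apply Rmult_le_compat_l; lra.
    + rewrite RInt_cexp by lra. simpl pow.
      assert (0 <= Cx G L x0 * (/2) ^ n) by (apply Rmult_le_pos; auto; apply pow_le; lra).
      pose proof (exp_pos (12 * L * t)).
      replace (6 * L * Cx G L x0 * (/ 2) ^ n / (12 * L)) with (Cx G L x0 * (/2)^n / 2) by (field; lra).
      nra.
Qed.

Lemma pic_cauchy G L x0 : lipG G L -> 0 < L ->
  forall n k t i, 0 <= t -> (i <= 5)%nat ->
  Rabs (pic G x0 (n + k) t i - pic G x0 n t i) <=
    2 * Cx G L x0 * (/2) ^ n * exp (12 * L * t) - 2 * Cx G L x0 * (/2) ^ (n + k) * exp (12 * L * t).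
Proof.
  intros HL L0 n k t i Ht Hi. induction k.
  - rewrite Nat.add_0_r, Rminus_eq_0, Rabs_R0. lra.
  - replace (n + S k)%nat with (S (n + k)) by lia.
    pose proof (pic_step G L x0 HL L0 (n + k) t i Ht Hi).
    replace (pic G x0 (S (n + k)) t i - pic G x0 n t i) with
      ((pic G x0 (S (n + k)) t i - pic G x0 (n + k) t i) + (pic G x0 (n + k) t i - pic G x0 n t i)) by ring.
    eapply Rle_trans. apply Rabs_triang. simpl pow. lra.
Qed.

Lemma pic_cauchy' G L x0 : lipG G L -> 0 < L ->
  forall n m t i, (n <= m)%nat -> 0 <= t -> (i <= 5)%nat ->
  Rabs (pic G x0 m t i - pic G x0 n t i) <= 2 * Cx G L x0 * (/2) ^ n * exp (12 * L * t).
Proof.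
  intros HL L0 n m t i Hnm Ht Hi. replace m with (n + (m - n))%nat by lia.
  eapply Rle_trans. apply (pic_cauchy G L x0 HL L0); auto.
  assert (0 <= 2 * Cx G L x0 * (/2) ^ (n + (m - n)) * exp (12 * L * t)).
  { apply Rmult_le_pos. apply Rmult_le_pos. pose proof (Cx_nonneg G L x0 L0); lra.
    apply pow_le; lra. left; apply exp_pos. }
  lra.
Qed.

Lemma half_pow_small e : 0 < e -> exists N, forall n, (n >= N)%nat -> (/2) ^ n < e.
Proof.
  intros He. destruct (pow_lt_1_zero (/2) ltac:(rewrite Rabs_right; lra) e He) as [N HN].
  exists N. intros n Hn. specialize (HN n Hn). rewrite Rabs_right in HN; auto.
  apply Rle_ge, pow_le; lra.
Qed.

Definition Xlim G x0 (t : R) (i : nat) : R := real (Lim_seq (fun n => pic G x0 n (Rmax 0 t) i)).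

Lemma Xlim_lim G L x0 : lipG G L -> 0 < L ->
  forall t i, (i <= 5)%nat -> is_lim_seq (fun n => pic G x0 n (Rmax 0 t) i) (Xlim G x0 t i).
Proof.
  intros HL L0 t i Hi. unfold Xlim. apply Lim_seq_correct'.
  apply ex_lim_seq_cauchy_corr. intros [e He].
  set (M := 2 * Cx G L x0 * exp (12 * L * Rmax 0 t) + 1).
  assert (HM : 0 < M). { unfold M. pose proof (Cx_nonneg G L x0 L0). pose proof (exp_pos (12 * L * Rmax 0 t)). nra. }
  destruct (half_pow_small (e / M) ltac:(apply Rdiv_lt_0_compat; lra)) as [N HN].
  exists N. intros n m Hn Hm. simpl.
  assert (H0t : 0 <= Rmax 0 t) by apply Rmax_l.
  assert (Hb : forall a b, (N <= a)%nat -> (a <= b)%nat ->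
     Rabs (pic G x0 b (Rmax 0 t) i - pic G x0 a (Rmax 0 t) i) < e).
  { intros a b Ha Hab. eapply Rle_lt_trans. apply (pic_cauchy' G L x0 HL L0); auto.
    specialize (HN a Ha). pose proof (Cx_nonneg G L x0 L0). pose proof (exp_pos (12 * L * Rmax 0 t)).
    assert (HH : (/2)^a * M < e). { apply Rmult_lt_reg_r with (/M). apply Rinv_0_lt_compat; lra.
      rewrite Rmult_assoc, Rinv_r by lra. lra. }
    unfold M in HH. pose proof (pow_le (/2) a ltac:(lra)). nra. }
  destruct (Nat.le_ge_cases n m).
  - rewrite <- Rabs_Ropp. replace (- _) with (pic G x0 m (Rmax 0 t) i - pic G x0 n (Rmax 0 t) i) by ring. auto.
  - apply Hb; auto.
Qed.

Lemma Xlim_bound G L x0 : lipG G L -> 0 < L ->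
  forall t n i, (i <= 5)%nat ->
  Rabs (Xlim G x0 t i - pic G x0 n (Rmax 0 t) i) <= 2 * Cx G L x0 * (/2) ^ n * exp (12 * L * Rmax 0 t).
Proof.
  intros HL L0 t n i Hi. pose proof (Xlim_lim G L x0 HL L0 t i Hi) as H.
  apply is_lim_seq_Reals in H.
  apply Rnot_lt_le. intros Hlt.
  set (g := Rabs (Xlim G x0 t i - pic G x0 n (Rmax 0 t) i) - 2 * Cx G L x0 * (/2) ^ n * exp (12 * L * Rmax 0 t)).
  destruct (H g ltac:(unfold g; lra)) as [N HN].
  specialize (HN (max N n) ltac:(lia)). unfold R_dist in HN.
  pose proof (pic_cauchy' G L x0 HL L0 n (max N n) (Rmax 0 t) i ltac:(lia) (Rmax_l _ _) Hi).
  pose proof (Rabs_triang (Xlim G x0 t i - pic G x0 (max N n) (Rmax 0 t) i) (pic G x0 (max N n) (Rmax 0 t) i - pic G x0 n (Rmax 0 t) i)).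
  replace (Xlim G x0 t i - pic G x0 (max N n) (Rmax 0 t) i + (pic G x0 (max N n) (Rmax 0 t) i - pic G x0 n (Rmax 0 t) i))
    with (Xlim G x0 t i - pic G x0 n (Rmax 0 t) i) in H1 by ring.
  rewrite <- Rabs_Ropp in HN. replace (- (pic G x0 (max N n) (Rmax 0 t) i - Xlim G x0 t i)) with
    (Xlim G x0 t i - pic G x0 (max N n) (Rmax 0 t) i) in HN by ring.
  unfold g in *. lra.
Qed.

Lemma rmax_lip s t : Rabs (Rmax 0 s - Rmax 0 t) <= Rabs (s - t).
Proof.
  pose proof (Rle_abs (s - t)). pose proof (Rle_abs (t - s)). rewrite Rabs_minus_sym in H0.
  apply Rabs_le. unfold Rmax. destruct (Rle_dec 0 s); destruct (Rle_dec 0 t); lra.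
Qed.

Lemma ctn_rmax f t : ctn f (Rmax 0 t) -> ctn (fun s => f (Rmax 0 s)) t.
Proof. intros H e He. destruct (H e He) as [d [Hd K]]. exists d; split; auto.
  intros s Hs. apply K. eapply Rle_lt_trans. apply rmax_lip. auto. Qed.

Lemma Xlim_ctn G L x0 : lipG G L -> 0 < L ->
  forall t i, (i <= 5)%nat -> ctn (fun s => Xlim G x0 s i) t.
Proof.
  intros HL L0 t i Hi e He.
  set (T := Rabs t + 1).
  set (M := 2 * Cx G L x0 * exp (12 * L * T) + 1).
  assert (HM : 0 < M). { unfold M. pose proof (Cx_nonneg G L x0 L0). pose proof (exp_pos (12 * L * T)). nra. }
  destruct (half_pow_small (e / 3 / M) ltac:(apply Rdiv_lt_0_compat; lra)) as [N HN].
  specialize (HN N (le_n _)).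
  assert (HH : (/2)^N * M < e / 3). { apply Rmult_lt_reg_r with (/M). apply Rinv_0_lt_compat; lra.
      rewrite Rmult_assoc, Rinv_r by lra. lra. }
  assert (Hbnd : forall s, Rmax 0 s <= T ->
     Rabs (Xlim G x0 s i - pic G x0 N (Rmax 0 s) i) < e / 3).
  { intros s Hs. eapply Rle_lt_trans. apply (Xlim_bound G L x0 HL L0); auto.
    pose proof (exp_le _ _ (Rmult_le_compat_l (12 * L) _ _ ltac:(lra) Hs)).
    pose proof (Cx_nonneg G L x0 L0). pose proof (pow_le (/2) N ltac:(lra)).
    assert (HA : 0 <= 2 * Cx G L x0 * (/ 2) ^ N) by nra.
    pose proof (Rmult_le_compat_l _ _ _ HA H).
    assert (E1 : (/2)^N * (2 * Cx G L x0 * exp (12 * L * T) + 1) = 2 * Cx G L x0 * (/2)^N * exp (12 * L * T) + (/2)^N) by ring. unfold M in HH. lra. }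
  assert (HY : ctn (fun s => pic G x0 N (Rmax 0 s) i) t).
  { apply (ctn_rmax (fun u => pic G x0 N u i)). apply (pic_ctn G L); auto. }
  destruct (HY (e/3) ltac:(lra)) as [d [Hd K]].
  exists (Rmin d 1). split. apply Rmin_pos; lra.
  intros s Hs.
  assert (Hs1 : Rabs (s - t) < d) by (eapply Rlt_le_trans; [apply Hs|apply Rmin_l]).
  assert (Hs2 : Rabs (s - t) < 1) by (eapply Rlt_le_trans; [apply Hs|apply Rmin_r]).
  assert (Ts : Rmax 0 s <= T).
  { unfold T. pose proof (Rle_abs t). pose proof (Rle_abs (s - t)). apply Rmax_lub; [pose proof (Rabs_pos t); lra| lra]. }
  assert (Tt : Rmax 0 t <= T).
  { unfold T. pose proof (Rle_abs t). apply Rmax_lub; [pose proof (Rabs_pos t); lra| lra]. }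
  specialize (K s Hs1). pose proof (Hbnd s Ts). pose proof (Hbnd t Tt).
  replace (Xlim G x0 s i - Xlim G x0 t i) with
    ((Xlim G x0 s i - pic G x0 N (Rmax 0 s) i) + (pic G x0 N (Rmax 0 s) i - pic G x0 N (Rmax 0 t) i)
     - (Xlim G x0 t i - pic G x0 N (Rmax 0 t) i)) by ring.
  eapply Rle_lt_trans. apply Rabs_triang. rewrite Rabs_Ropp.
  eapply Rle_lt_trans. apply Rplus_le_compat_r. apply Rabs_triang. lra.
Qed.

Lemma Xlim_int G L x0 : lipG G L -> 0 < L ->
  forall t i, 0 <= t -> (i <= 5)%nat ->
  Xlim G x0 t i = x0 i + RInt (fun s => G (Xlim G x0 s) i) 0 t.
Proof.
  intros HL L0 t i Ht Hi.
  set (D := Rabs (Xlim G x0 t i - (x0 i + RInt (fun s => G (Xlim G x0 s) i) 0 t))).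
  set (E := exp (12 * L * t)).
  set (M := 2 * Cx G L x0 * E + 12 * L * Cx G L x0 * E * t + 1).
  assert (HE : 0 < E) by apply exp_pos.
  pose proof (Cx_nonneg G L x0 L0) as HC.
  assert (HM : 0 < M). { unfold M. assert (0 <= Cx G L x0 * E) by (apply Rmult_le_pos; lra). assert (0 <= L * (Cx G L x0 * E) * t) by (apply Rmult_le_pos; [apply Rmult_le_pos|]; lra). lra. }
  assert (Hn : forall n, D <= (/2) ^ n * M).
  { intros n.
    assert (Hp : pic G x0 (S n) t i = x0 i + RInt (fun s => G (pic G x0 n s) i) 0 t) by reflexivity.
    assert (Hc1 : forall s, ctn (fun s => G (pic G x0 n s) i) s).
    { intros s. apply (G_ctn G L (pic G x0 n)); auto. intros; apply (pic_ctn G L); auto. }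
    assert (Hc2 : forall s, ctn (fun s => G (Xlim G x0 s) i) s).
    { intros s. apply (G_ctn G L (Xlim G x0)); auto. intros; apply (Xlim_ctn G L); auto. }
    assert (B1 : Rabs (Xlim G x0 t i - pic G x0 (S n) t i) <= 2 * Cx G L x0 * (/2) ^ n * E).
    { pose proof (Xlim_bound G L x0 HL L0 t (S n) i Hi). rewrite Rmax_right in H by lra.
      simpl pow in H. fold E in H. pose proof (pow_le (/2) n ltac:(lra)).
      assert (0 <= Cx G L x0 * (/2)^n * E) by (apply Rmult_le_pos; [apply Rmult_le_pos|]; lra). lra. }
    assert (B2 : Rabs (RInt (fun s => G (pic G x0 n s) i - G (Xlim G x0 s) i) 0 t) <=
                 t * (12 * L * Cx G L x0 * (/2) ^ n * E)).
    { rewrite <- RInt_cst. apply abs_RInt_bound; auto.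
      - intros; apply ctn_minus; auto.
      - intros s e0 He0. exists 1. split; [lra|]. intros. rewrite Rminus_eq_0, Rabs_R0. auto.
      - intros s Hs. eapply Rle_trans. apply HL; auto.
        assert (sum_f_R0 (fun j => Rabs (pic G x0 n s j - Xlim G x0 s j)) 5 <=
              sum_f_R0 (fun _ => 2 * Cx G L x0 * (/2) ^ n * E) 5).
        { apply sum_Rle. intros j Hj. rewrite Rabs_minus_sym.
          pose proof (Xlim_bound G L x0 HL L0 s n j Hj). rewrite Rmax_right in H by lra.
          eapply Rle_trans. apply H. pose proof (pow_le (/2) n ltac:(lra)).
          pose proof (exp_le (12 * L * s) (12 * L * t) ltac:(nra)). fold E in H1.
          assert (0 <= 2 * Cx G L x0 * (/ 2) ^ n) by nra. nra. }
        rewrite sum_cte in H. simpl INR in H.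
        replace (12 * L * Cx G L x0 * (/ 2) ^ n * E) with (L * (2 * Cx G L x0 * (/ 2) ^ n * E * (1+1+1+1+1+1))) by ring.
        apply Rmult_le_compat_l; lra. }
    rewrite RInt_minus' in B2 by (apply ex_RInt_ctn; auto).
    rewrite Hp in B1.
    assert (D <= Rabs (Xlim G x0 t i - (x0 i + RInt (fun s : R => G (pic G x0 n s) i) 0 t)) +
      Rabs (RInt (fun s : R => G (pic G x0 n s) i) 0 t - RInt (fun s : R => G (Xlim G x0 s) i) 0 t)).
    { unfold D. eapply Rle_trans; [|apply Rabs_triang]. right. f_equal. ring. }
    pose proof (pow_le (/2) n ltac:(lra)). unfold M. nra. }
  assert (HD0 : 0 <= D) by apply Rabs_pos.
  assert (D = 0).
  { apply Rle_antisym; auto. apply Rnot_lt_le. intros HD.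
    destruct (half_pow_small (D / M) ltac:(apply Rdiv_lt_0_compat; lra)) as [N HN].
    specialize (HN N (le_n _)). specialize (Hn N).
    assert ((/2)^N * M < D). { apply Rmult_lt_reg_r with (/M). apply Rinv_0_lt_compat; lra.
      rewrite Rmult_assoc, Rinv_r by lra. lra. } lra. }
  unfold D in H. apply Rabs_eq_0 in H. lra.
Qed.

Lemma picard G L (x0 : nat -> R) : lipG G L -> 0 < L ->
  exists X : R -> nat -> R,
    (forall i, (i <= 5)%nat -> X 0 i = x0 i) /\
    (forall t i, (i <= 5)%nat -> ctn (fun s => X s i) t) /\
    (forall t i, 0 < t -> (i <= 5)%nat -> is_derive (fun s => X s i) t (G (X t) i)).
Proof.
  intros HL L0. exists (Xlim G x0). split; [|split].
  - intros i Hi. rewrite (Xlim_int G L x0 HL L0 0 i (Rle_refl _) Hi), RInt_point. 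
    unfold zero; simpl. ring.
  - intros t i Hi. apply (Xlim_ctn G L); auto.
  - intros t i Ht Hi.
    assert (Hc2 : forall s, ctn (fun s => G (Xlim G x0 s) i) s).
    { intros s. apply (G_ctn G L (Xlim G x0)); auto. intros; apply (Xlim_ctn G L); auto. }
    apply is_derive_ext_loc with (f := fun s => x0 i + RInt (fun s => G (Xlim G x0 s) i) 0 s).
    + exists (mkposreal t Ht). intros y Hy. apply ball_R in Hy. simpl in Hy.
      apply Rabs_def2 in Hy. change (y - t < t /\ - t < y - t) in Hy. assert (Hy0 : 0 <= y) by lra. rewrite (Xlim_int G L x0 HL L0 y i Hy0 Hi). reflexivity.
    + pose proof (RInt_deriv _ Hc2 t) as H1.
      pose proof (is_derive_const (K:=R_AbsRing) (V:=R_NormedModule) (x0 i) t) as H2.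
      pose proof (is_derive_plus _ _ _ _ _ H2 H1) as H3.
      unfold plus, zero in H3; simpl in H3. rewrite Rplus_0_l in H3. exact H3.
Qed.

Definition sv p := Lambda p / delta p.
Definition uR p := beta p / theta3 p.
Definition uU p := (beta p + eta p * uR p) / theta4 p.
Definition uI p := (beta p + gamma p * q p * uR p + gamma p * (1 - q p) * uU p) / theta2 p.

Lemma th_pos p : admissible p ->
  0 < theta1 p /\ 0 < theta2 p /\ 0 < theta3 p /\ 0 < theta4 p.
Proof. unfold admissible, theta1, theta2, theta3, theta4. intros; lra. Qed.

Lemma R0_uI p : admissible p -> basic_R0 p = a p * uI p / theta1 p.
Proof.
  intros Hp. pose proof (th_pos p Hp) as [T1 [T2 [T3 T4]]].
  unfold admissible in Hp.
  unfold basic_R0, uI, uU, uR, PP, Ndfe. field. repeat split; lra.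
Qed.

Lemma PP_pos p : admissible p -> 0 < PP p.
Proof.
  intros Hp. pose proof (th_pos p Hp) as [T1 [T2 [T3 T4]]]. unfold admissible in Hp.
  unfold PP. assert (0 <= gamma p * (1 - q p) * (eta p + theta3 p)).
  { apply Rmult_le_pos; [apply Rmult_le_pos|]; lra. }
  assert (0 < theta4 p * (theta3 p + q p * gamma p)).
  { apply Rmult_lt_0_compat; [lra|]. assert (0 <= q p * gamma p) by (apply Rmult_le_pos; lra). lra. }
  lra.
Qed.

Lemma u_pos p : admissible p -> 0 < uR p /\ 0 < uU p /\ 0 < uI p.
Proof.
  intros Hp. pose proof (th_pos p Hp) as [T1 [T2 [T3 T4]]]. unfold admissible in Hp.
  assert (HR : 0 < uR p) by (unfold uR; apply Rdiv_lt_0_compat; lra).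
  assert (HU : 0 < uU p).
  { unfold uU; apply Rdiv_lt_0_compat; [|lra]. assert (0 < eta p * uR p) by (apply Rmult_lt_0_compat; lra). lra. }
  split; auto; split; auto. unfold uI; apply Rdiv_lt_0_compat; [|lra].
  assert (0 <= gamma p * q p * uR p) by (apply Rmult_le_pos; [apply Rmult_le_pos|]; lra).
  assert (0 <= gamma p * (1 - q p) * uU p) by (apply Rmult_le_pos; [apply Rmult_le_pos|]; lra).
  lra.
Qed.

Lemma R0_pos p : admissible p -> 0 < basic_R0 p.
Proof.
  intros Hp. rewrite R0_uI by auto. pose proof (th_pos p Hp) as [T1 _].
  pose proof (u_pos p Hp) as [_ [_ HI]]. unfold admissible in Hp.
  apply Rdiv_lt_0_compat; [apply Rmult_lt_0_compat|]; lra.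
Qed.

Lemma u_rel p : admissible p ->
  theta3 p * uR p = beta p /\ theta4 p * uU p = beta p + eta p * uR p /\
  theta2 p * uI p = beta p + gamma p * q p * uR p + gamma p * (1 - q p) * uU p /\
  a p * uI p = theta1 p * basic_R0 p.
Proof.
  intros Hp. pose proof (th_pos p Hp) as [T1 [T2 [T3 T4]]].
  rewrite R0_uI by auto. unfold uI, uU, uR.
  repeat split; field; lra.
Qed.

Definition inball p (x : state) r :=
  Rabs (sS x - sv p) < r /\ Rabs (sE x) < r /\ Rabs (sI x) < r /\
  Rabs (sR x) < r /\ Rabs (sU x) < r /\ Rabs (sC x) < r.

Lemma dist_inball p x r : dist_st x (E0 p) < r <-> inball p x r.
Proof.
  unfold dist_st, E0, inball, sv; simpl. rewrite !Rminus_0_r.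
  rewrite !Rmax_Rlt. tauto.
Qed.

Lemma dist_comp x y r : dist_st x y < r ->
  Rabs (sS x - sS y) < r /\ Rabs (sE x - sE y) < r /\ Rabs (sI x - sI y) < r /\
  Rabs (sR x - sR y) < r /\ Rabs (sU x - sU y) < r /\ Rabs (sC x - sC y) < r.
Proof. unfold dist_st. rewrite !Rmax_Rlt. tauto. Qed.

Lemma DL_comp (y : R -> R) t l dd B : is_derive y t l -> dd <= 0 -> Rabs (l - dd * y t) <= B ->
  DL (fun s => Rabs (y s)) t (dd * Rabs (y t) + B).
Proof. intros H Hd HB. eapply DL_mono; [|apply (DL_abs y t l dd H Hd)]. lra. Qed.

Lemma is_derive_sub_const (f : R -> R) t l c : is_derive f t l -> is_derive (fun s => f s - c) t l.
Proof.
  intros H. apply is_derive_Reals in H. apply is_derive_Reals.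
  replace l with (l - 0) by ring. apply (derivable_pt_lim_minus f (fun _ => c)); auto.
  apply derivable_pt_lim_const.
Qed.

Lemma ratio_le s k rho S E I R U C : 0 < s -> 1 < k -> rho = (k - 1) * s / (1 + 6 * k) ->
  Rabs (S - s) < rho -> Rabs E < rho -> Rabs I < rho -> Rabs R < rho -> Rabs U < rho -> Rabs C < rho ->
  0 < S /\ 0 < S + E + I + R + U + C /\ S / (S + E + I + R + U + C) <= k.
Proof.
  intros Hs Hk Hr H1 H2 H3 H4 H5 H6.
  apply Rabs_def2 in H1, H2, H3, H4, H5, H6.
  assert (Hr2 : rho * (1 + 6 * k) = (k - 1) * s) by (rewrite Hr; field; lra).
  assert (6 * rho < s) by nra.
  split; [lra|split; [lra|]].
  apply Rmult_le_reg_r with (S + E + I + R + U + C); [lra|].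
  unfold Rdiv; rewrite Rmult_assoc, Rinv_l by lra. nra.
Qed.

Lemma ratio_ge s k rho S E I R U C : 0 < s -> 0 < k < 1 -> rho = (1 - k) * s / (1 + 6 * k) ->
  0 <= E -> 0 <= I -> 0 <= R -> 0 <= U -> 0 <= C ->
  Rabs (S - s) < rho -> Rabs E < rho -> Rabs I < rho -> Rabs R < rho -> Rabs U < rho -> Rabs C < rho ->
  0 < S /\ k <= S / (S + E + I + R + U + C).
Proof.
  intros Hs Hk Hr P1 P2 P3 P4 P5 H1 H2 H3 H4 H5 H6.
  apply Rabs_def2 in H1, H2, H3, H4, H5, H6.
  assert (Hr2 : rho * (1 + 6 * k) = (1 - k) * s) by (rewrite Hr; field; lra).
  assert (rho < s) by nra.
  split; [lra|].
  apply Rmult_le_reg_r with (S + E + I + R + U + C); [lra|].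
  unfold Rdiv; rewrite Rmult_assoc, Rinv_l by lra. nra.
Qed.

Definition kk p := (3 + basic_R0 p) / (2 * (1 + basic_R0 p)).
Definition uE p := (1 + basic_R0 p) / 2.
Definition al1 p := (1 - basic_R0 p) / (16 * kk p).
Definition csum p := c1 p + c2 p + c3 p + c4 p.
Definition al2 p := (1 - basic_R0 p) * beta p * theta1 p / (16 * csum p * (beta p + theta1 p)).
Definition rhoS p := (kk p - 1) * sv p / (1 + 6 * kk p).
Definition Zf p (x : state) := uE p * Rabs (sE x) + uI p * Rabs (sI x) + uR p * Rabs (sR x) +
  uU p * Rabs (sU x) + al1 p * Rabs (sS x - sv p) + al2 p * Rabs (sC x).
Definition Mf p (x : state) := Rabs (sS x - sv p) + Rabs (sE x) + Rabs (sI x) + Rabs (sR x) +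
  Rabs (sU x) + Rabs (sC x).
Definition mu p := Rmin (Rmin (theta1 p * (1 - basic_R0 p) / 4) (beta p * (1 - basic_R0 p) / 8))
  (Rmin (al1 p * delta p) (al2 p * delta5 p)).

Lemma kk_prop p : admissible p -> basic_R0 p < 1 -> 1 < kk p /\ uE p * kk p = (3 + basic_R0 p) / 4.
Proof. intros Hp HR. pose proof (R0_pos p Hp). unfold kk, uE. split.
  apply Rmult_lt_reg_r with (2 * (1 + basic_R0 p)). lra. unfold Rdiv. rewrite Rmult_assoc, Rinv_l by lra. lra.
  field. lra. Qed.

Lemma sv_pos p : admissible p -> 0 < sv p.
Proof. unfold admissible, sv; intros; apply Rdiv_lt_0_compat; lra. Qed.

Lemma stab_consts p : admissible p -> basic_R0 p < 1 ->
  0 < al1 p /\ 0 < al2 p /\ al1 p * kk p * beta p = beta p * (1 - basic_R0 p) / 16 /\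
  al2 p * c1 p <= theta1 p * (1 - basic_R0 p) / 16 /\
  al2 p * c2 p <= beta p * (1 - basic_R0 p) / 16 /\
  al2 p * c3 p <= beta p * (1 - basic_R0 p) / 16 /\
  al2 p * c4 p <= beta p * (1 - basic_R0 p) / 16 /\ 0 < mu p /\ 0 < rhoS p.
Proof.
  intros Hp HR. pose proof (kk_prop p Hp HR) as [Hk _]. pose proof (th_pos p Hp) as [T1 _].
  pose proof (sv_pos p Hp). pose proof (R0_pos p Hp).
  pose proof Hp as Hp'. unfold admissible in Hp'.
  assert (Hc : 0 < csum p) by (unfold csum; lra).
  assert (A1 : 0 < al1 p) by (unfold al1; apply Rdiv_lt_0_compat; lra).
  assert (A2 : 0 < al2 p).
  { unfold al2; apply Rdiv_lt_0_compat. apply Rmult_lt_0_compat; [apply Rmult_lt_0_compat|]; lra.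
    apply Rmult_lt_0_compat; [|lra]. lra. }
  assert (Hgen : forall ci, 0 < ci -> ci <= csum p ->
     al2 p * ci <= (1 - basic_R0 p) * (beta p * theta1 p / (beta p + theta1 p)) / 16).
  { intros ci Hci Hle. unfold al2.
    set (w := (1 - basic_R0 p) * (beta p * theta1 p / (beta p + theta1 p)) / 16).
    assert (0 < w). { unfold w. apply Rdiv_lt_0_compat; [|lra]. apply Rmult_lt_0_compat; [lra|].
      apply Rdiv_lt_0_compat; [apply Rmult_lt_0_compat|]; lra. }
    replace ((1 - basic_R0 p) * beta p * theta1 p / (16 * csum p * (beta p + theta1 p)) * ci)
      with (w * (ci / csum p)) by (unfold w; field; lra).
    assert (ci / csum p <= 1). { apply Rmult_le_reg_r with (csum p); auto. unfold Rdiv.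
      rewrite Rmult_assoc, Rinv_l by lra. lra. }
    nra. }
  assert (B1 : beta p * theta1 p / (beta p + theta1 p) <= theta1 p).
  { apply Rmult_le_reg_r with (beta p + theta1 p). lra. unfold Rdiv. rewrite Rmult_assoc, Rinv_l by lra. nra. }
  assert (B2 : beta p * theta1 p / (beta p + theta1 p) <= beta p).
  { apply Rmult_le_reg_r with (beta p + theta1 p). lra. unfold Rdiv. rewrite Rmult_assoc, Rinv_l by lra. nra. }
  unfold csum in Hgen.
  split; auto. split; auto. split. unfold al1. field. lra.
  split. eapply Rle_trans. apply Hgen; lra. nra.
  split. eapply Rle_trans. apply Hgen; lra. nra.
  split. eapply Rle_trans. apply Hgen; lra. nra.
  split. eapply Rle_trans. apply Hgen; lra. nra.
  split. unfold mu. apply Rmin_pos; apply Rmin_pos.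
  apply Rdiv_lt_0_compat; [apply Rmult_lt_0_compat|]; lra.
  apply Rdiv_lt_0_compat; [apply Rmult_lt_0_compat|]; lra.
  apply Rmult_lt_0_compat; lra. apply Rmult_lt_0_compat; lra.
  unfold rhoS. apply Rdiv_lt_0_compat; [apply Rmult_lt_0_compat|]; lra.
Qed.

Lemma force_bound_stab p X : admissible p -> basic_R0 p < 1 -> inball p X (rhoS p) ->
  Rabs (force p X) <= beta p * kk p * (Rabs (sI X) + Rabs (sU X) + Rabs (sR X)).
Proof.
  intros Hp HR [H1 [H2 [H3 [H4 [H5 H6]]]]].
  pose proof (kk_prop p Hp HR) as [Hk _]. pose proof (sv_pos p Hp).
  destruct (ratio_le (sv p) (kk p) (rhoS p) (sS X) (sE X) (sI X) (sR X) (sU X) (sC X) H Hk eq_refl H1 H2 H3 H4 H5 H6)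
    as [HS [HN Hr]].
  unfold force, totalN. pose proof Hp as Hp'. unfold admissible in Hp'.
  set (N := sS X + sE X + sI X + sR X + sU X + sC X) in *.
  replace (beta p * sS X / N * (sI X + sU X + sR X)) with (beta p * (sS X / N) * (sI X + sU X + sR X)) by (unfold Rdiv; ring).
  assert (0 <= sS X / N) by (left; apply Rdiv_lt_0_compat; lra).
  rewrite Rabs_mult, (Rabs_right (beta p * (sS X / N))) by (apply Rle_ge, Rmult_le_pos; lra).
  pose proof (Rabs_triang (sI X + sU X) (sR X)). pose proof (Rabs_triang (sI X) (sU X)).
  assert (beta p * (sS X / N) <= beta p * kk p) by (apply Rmult_le_compat_l; lra).
  assert (0 <= Rabs (sI X + sU X + sR X)) by apply Rabs_pos.
  assert (beta p * (sS X / N) * Rabs (sI X + sU X + sR X) <= beta p * kk p * Rabs (sI X + sU X + sR X))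
    by (apply Rmult_le_compat_r; auto).
  assert (beta p * kk p * Rabs (sI X + sU X + sR X) <= beta p * kk p * (Rabs (sI X) + Rabs (sU X) + Rabs (sR X))).
  { apply Rmult_le_compat_l. apply Rmult_le_pos; lra. lra. }
  lra.
Qed.

Lemma key_stab p x t : admissible p -> basic_R0 p < 1 -> is_solution p x -> 0 < t ->
  inball p (x t) (rhoS p) -> DL (fun s => Zf p (x s)) t (- mu p * Mf p (x t)).
Proof.
  intros Hp HR [Hd _] Ht Hb.
  destruct (Hd t Ht) as [DS [DE [DI [DR [DU DC]]]]].
  pose proof (force_bound_stab p (x t) Hp HR Hb) as HF.
  pose proof (stab_consts p Hp HR) as [A1 [A2 [K1 [K2 [K3 [K4 [K5 [Hmu _]]]]]]]].
  pose proof (kk_prop p Hp HR) as [Hk HuEk].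
  pose proof (u_pos p Hp) as [UR [UU UI]].
  pose proof (u_rel p Hp) as [E1 [E2 [E3 E4]]].
  pose proof (th_pos p Hp) as [T1 [T2 [T3 T4]]].
  pose proof (R0_pos p Hp) as R0p.
  pose proof Hp as Hp'. unfold admissible in Hp'.
  set (X := x t) in *.
  set (J := Rabs (sI X) + Rabs (sU X) + Rabs (sR X)) in *.
  assert (LE := DL_comp (fun s => sE (x s)) t (fE p X) (- theta1 p) (beta p * kk p * J) DE ltac:(lra)
    ltac:(unfold fE, theta1; replace (force p X - (a p + delta1 p + c1 p) * sE X - - (a p + delta1 p + c1 p) * sE (x t)) with (force p X) by (unfold X; ring); auto)).
  assert (LI := DL_comp (fun s => sI (x s)) t (fI p X) (- theta2 p) (a p * Rabs (sE X)) DI ltac:(lra)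
    ltac:(unfold fI, theta2; replace (a p * sE X - (gamma p + delta2 p + c2 p) * sI X - - (gamma p + delta2 p + c2 p) * sI (x t)) with (a p * sE X) by (unfold X; ring); rewrite Rabs_mult, Rabs_right by lra; lra)).
  assert (LR := DL_comp (fun s => sR (x s)) t (fR p X) (- theta3 p) (gamma p * q p * Rabs (sI X) + eta p * Rabs (sU X)) DR ltac:(lra)
    ltac:(unfold fR, theta3; replace (gamma p * q p * sI X - (delta3 p + c3 p) * sR X + eta p * sU X - - (delta3 p + c3 p) * sR (x t)) with (gamma p * q p * sI X + eta p * sU X) by (unfold X; ring);
       eapply Rle_trans; [apply Rabs_triang|]; rewrite !Rabs_mult, (Rabs_right (gamma p)), (Rabs_right (q p)), (Rabs_right (eta p)) by lra; lra)).
  assert (LU := DL_comp (fun s => sU (x s)) t (fU p X) (- theta4 p) (gamma p * (1 - q p) * Rabs (sI X)) DU ltac:(lra)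
    ltac:(unfold fU, theta4; replace (gamma p * (1 - q p) * sI X - (delta4 p + c4 p) * sU X - eta p * sU X - - (delta4 p + c4 p + eta p) * sU (x t)) with (gamma p * (1 - q p) * sI X) by (unfold X; ring);
       rewrite !Rabs_mult, (Rabs_right (gamma p)), (Rabs_right (1 - q p)) by lra; lra)).
  assert (LZ := DL_comp (fun s => sS (x s) - sv p) t (fS p X) (- delta p) (beta p * kk p * J)
    (is_derive_sub_const _ t _ _ DS) ltac:(lra)
    ltac:(unfold fS; replace (Lambda p - force p X - delta p * sS X - - delta p * (sS (x t) - sv p)) with (- force p X)
       by (unfold X, sv; field; lra); rewrite Rabs_Ropp; auto)).
  assert (LC := DL_comp (fun s => sC (x s)) t (fC p X) (- delta5 p) (c1 p * Rabs (sE X) + c2 p * Rabs (sI X) + c3 p * Rabs (sR X) + c4 p * Rabs (sU X)) DC ltac:(lra)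
    ltac:(unfold fC; replace (c1 p * sE X + c2 p * sI X + c3 p * sR X + c4 p * sU X - delta5 p * sC X - - delta5 p * sC (x t)) with (c1 p * sE X + c2 p * sI X + c3 p * sR X + c4 p * sU X) by (unfold X; ring);
      eapply Rle_trans; [apply Rabs_triang|]; eapply Rle_trans; [apply Rplus_le_compat_r; apply Rabs_triang|];
      eapply Rle_trans; [apply Rplus_le_compat_r; apply Rplus_le_compat_r; apply Rabs_triang|];
      rewrite !Rabs_mult, (Rabs_right (c1 p)), (Rabs_right (c2 p)), (Rabs_right (c3 p)), (Rabs_right (c4 p)) by lra; lra)).
  pose proof (uE p) as _.
  assert (HuE : 0 < uE p) by (unfold uE; lra).
  pose proof (DL_plus _ _ _ _ _ (DL_plus _ _ _ _ _ (DL_plus _ _ _ _ _ (DL_plus _ _ _ _ _ (DL_plus _ _ _ _ _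
     (DL_scal _ _ _ (uE p) ltac:(lra) LE) (DL_scal _ _ _ (uI p) ltac:(lra) LI))
     (DL_scal _ _ _ (uR p) ltac:(lra) LR)) (DL_scal _ _ _ (uU p) ltac:(lra) LU))
     (DL_scal _ _ _ (al1 p) ltac:(lra) LZ)) (DL_scal _ _ _ (al2 p) ltac:(lra) LC)) as HDL.
  eapply DL_ext in HDL. 2:{ intros s. reflexivity. }
  eapply DL_mono; [|apply (DL_ext _ (fun s => Zf p (x s)) _ _ (fun s => ltac:(unfold Zf; reflexivity)) HDL)].
  unfold Mf. fold X. unfold J.
  set (mE := Rabs (sE X)). set (mI := Rabs (sI X)). set (mR := Rabs (sR X)). set (mU := Rabs (sU X)).
  set (mz := Rabs (sS X - sv p)). set (mC := Rabs (sC X)).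
  assert (P1 : 0 <= mE) by apply Rabs_pos. assert (P2 : 0 <= mI) by apply Rabs_pos.
  assert (P3 : 0 <= mR) by apply Rabs_pos. assert (P4 : 0 <= mU) by apply Rabs_pos.
  assert (P5 : 0 <= mz) by apply Rabs_pos. assert (P6 : 0 <= mC) by apply Rabs_pos.
  set (cE := a p * uI p - theta1 p * uE p + al2 p * c1 p).
  set (cI := uE p * kk p * beta p - theta2 p * uI p + gamma p * q p * uR p + gamma p * (1 - q p) * uU p + al1 p * kk p * beta p + al2 p * c2 p).
  set (cR := uE p * kk p * beta p - theta3 p * uR p + al1 p * kk p * beta p + al2 p * c3 p).
  set (cU := uE p * kk p * beta p + eta p * uR p - theta4 p * uU p + al1 p * kk p * beta p + al2 p * c4 p).
  match goal with |- ?L <= _ => assert (EqL : L = mE * cE + mI * cI + mR * cR + mU * cU + mz * (- (al1 p * delta p)) + mC * (- (al2 p * delta5 p))) by (unfold cE, cI, cR, cU; ring) end.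
  rewrite EqL.
  assert (M1 : mu p <= theta1 p * (1 - basic_R0 p) / 4) by (unfold mu; eapply Rle_trans; [apply Rmin_l|apply Rmin_l]).
  assert (M2 : mu p <= beta p * (1 - basic_R0 p) / 8) by (unfold mu; eapply Rle_trans; [apply Rmin_l|apply Rmin_r]).
  assert (M3 : mu p <= al1 p * delta p) by (unfold mu; eapply Rle_trans; [apply Rmin_r|apply Rmin_l]).
  assert (M4 : mu p <= al2 p * delta5 p) by (unfold mu; eapply Rle_trans; [apply Rmin_r|apply Rmin_r]).
  assert (UK : uE p * kk p * beta p = (3 + basic_R0 p) / 4 * beta p) by (rewrite HuEk; ring).
  assert (CE : cE <= - mu p).
  { unfold cE. rewrite E4. unfold uE. lra. }
  assert (CI : cI <= - mu p). { unfold cI. rewrite UK, K1. lra. }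
  assert (CR : cR <= - mu p). { unfold cR. rewrite UK, K1. lra. }
  assert (CU : cU <= - mu p). { unfold cU. rewrite UK, K1. lra. }
  assert (mE * cE <= mE * - mu p) by (apply Rmult_le_compat_l; lra).
  assert (mI * cI <= mI * - mu p) by (apply Rmult_le_compat_l; lra).
  assert (mR * cR <= mR * - mu p) by (apply Rmult_le_compat_l; lra).
  assert (mU * cU <= mU * - mu p) by (apply Rmult_le_compat_l; lra).
  assert (mz * - (al1 p * delta p) <= mz * - mu p) by (apply Rmult_le_compat_l; lra).
  assert (mC * - (al2 p * delta5 p) <= mC * - mu p) by (apply Rmult_le_compat_l; lra).
  lra.
Qed.

Definition wmax p := uE p + uI p + uR p + uU p + al1 p + al2 p.
Definition wmin p := Rmin (Rmin (Rmin (uE p) (uI p)) (Rmin (uR p) (uU p))) (Rmin (al1 p) (al2 p)).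

Lemma comps_le_dist X Y :
  Rabs (sS X - sS Y) <= dist_st X Y /\ Rabs (sE X - sE Y) <= dist_st X Y /\
  Rabs (sI X - sI Y) <= dist_st X Y /\ Rabs (sR X - sR Y) <= dist_st X Y /\
  Rabs (sU X - sU Y) <= dist_st X Y /\ Rabs (sC X - sC Y) <= dist_st X Y.
Proof.
  unfold dist_st.
  repeat split;
  repeat (match goal with
   | |- ?a <= ?a => apply Rle_refl
   | |- ?a <= Rmax ?a _ => apply Rmax_l
   | |- ?a <= Rmax ?b ?c => eapply Rle_trans; [|apply Rmax_r]
   end).
Qed.

Lemma weights_pos p : admissible p -> basic_R0 p < 1 ->
  0 < uE p /\ 0 < uI p /\ 0 < uR p /\ 0 < uU p /\ 0 < al1 p /\ 0 < al2 p /\ 0 < wmin p /\ 0 < wmax p.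
Proof.
  intros Hp HR. pose proof (u_pos p Hp) as [UR [UU UI]]. pose proof (R0_pos p Hp).
  pose proof (stab_consts p Hp HR) as [A1 [A2 _]].
  assert (0 < uE p) by (unfold uE; lra).
  repeat split; auto. unfold wmin. repeat apply Rmin_pos; auto. unfold wmax; lra.
Qed.

Lemma wmin_le p : wmin p <= uE p /\ wmin p <= uI p /\ wmin p <= uR p /\ wmin p <= uU p /\
  wmin p <= al1 p /\ wmin p <= al2 p.
Proof.
  unfold wmin. repeat split.
  - eapply Rle_trans; [apply Rmin_l|]; eapply Rle_trans; [apply Rmin_l|]; apply Rmin_l.
  - eapply Rle_trans; [apply Rmin_l|]; eapply Rle_trans; [apply Rmin_l|]; apply Rmin_r.
  - eapply Rle_trans; [apply Rmin_l|]; eapply Rle_trans; [apply Rmin_r|]; apply Rmin_l.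
  - eapply Rle_trans; [apply Rmin_l|]; eapply Rle_trans; [apply Rmin_r|]; apply Rmin_r.
  - eapply Rle_trans; [apply Rmin_r|]; apply Rmin_l.
  - eapply Rle_trans; [apply Rmin_r|]; apply Rmin_r.
Qed.

Lemma Zf_lip p X Y : admissible p -> basic_R0 p < 1 -> Rabs (Zf p X - Zf p Y) <= wmax p * dist_st X Y.
Proof.
  intros Hp HR. pose proof (weights_pos p Hp HR) as [W1 [W2 [W3 [W4 [W5 [W6 _]]]]]].
  pose proof (comps_le_dist X Y) as [D1 [D2 [D3 [D4 [D5 D6]]]]].
  assert (G : forall w a b, 0 < w -> Rabs (a - b) <= dist_st X Y -> Rabs (w * Rabs a - w * Rabs b) <= w * dist_st X Y).
  { intros w a0 b0 Hw Hd. rewrite <- Rmult_minus_distr_l, Rabs_mult, Rabs_right by lra.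
    apply Rmult_le_compat_l; [lra|]. eapply Rle_trans; [apply Rabs_triang_inv2|]; auto. }
  assert (D1' : Rabs ((sS X - sv p) - (sS Y - sv p)) <= dist_st X Y) by (replace ((sS X - sv p) - (sS Y - sv p)) with (sS X - sS Y) by ring; auto).
  pose proof (G _ _ _ W1 D2). pose proof (G _ _ _ W2 D3). pose proof (G _ _ _ W3 D4).
  pose proof (G _ _ _ W4 D5). pose proof (G _ _ _ W5 D1'). pose proof (G _ _ _ W6 D6).
  unfold Zf, wmax.
  set (a1 := uE p * Rabs (sE X) - uE p * Rabs (sE Y)) in *.
  set (a2 := uI p * Rabs (sI X) - uI p * Rabs (sI Y)) in *.
  set (a3 := uR p * Rabs (sR X) - uR p * Rabs (sR Y)) in *.
  set (a4 := uU p * Rabs (sU X) - uU p * Rabs (sU Y)) in *.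
  set (a5 := al1 p * Rabs (sS X - sv p) - al1 p * Rabs (sS Y - sv p)) in *.
  set (a6 := al2 p * Rabs (sC X) - al2 p * Rabs (sC Y)) in *.
  match goal with |- Rabs ?L <= _ => replace L with (a1 + a2 + a3 + a4 + a5 + a6) by (unfold a1, a2, a3, a4, a5, a6; ring) end.
  pose proof (Rabs_triang (a1 + a2 + a3 + a4 + a5) a6).
  pose proof (Rabs_triang (a1 + a2 + a3 + a4) a5).
  pose proof (Rabs_triang (a1 + a2 + a3) a4).
  pose proof (Rabs_triang (a1 + a2) a3).
  pose proof (Rabs_triang a1 a2).
  lra.
Qed.

Lemma min6_pos d1 d2 d3 d4 d5 d6 : 0 < d1 -> 0 < d2 -> 0 < d3 -> 0 < d4 -> 0 < d5 -> 0 < d6 ->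
  exists d, 0 < d /\ d <= d1 /\ d <= d2 /\ d <= d3 /\ d <= d4 /\ d <= d5 /\ d <= d6.
Proof.
  intros. exists (Rmin d1 (Rmin d2 (Rmin d3 (Rmin d4 (Rmin d5 d6))))).
  repeat split; repeat apply Rmin_pos; auto;
  repeat (first [apply Rmin_l | apply Rle_refl | eapply Rle_trans; [apply Rmin_r|]]).
Qed.

Lemma sol_ctn p x t : is_solution p x -> 0 < t ->
  forall e, 0 < e -> exists d, 0 < d /\ forall s, Rabs (s - t) < d -> dist_st (x s) (x t) < e.
Proof.
  intros [Hd _] Ht e He. destruct (Hd t Ht) as [DS [DE [DI [DR [DU DC]]]]].
  destruct (derive_ctn _ _ _ DS e He) as [d1 [H1 K1]].
  destruct (derive_ctn _ _ _ DE e He) as [d2 [H2 K2]].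
  destruct (derive_ctn _ _ _ DI e He) as [d3 [H3 K3]].
  destruct (derive_ctn _ _ _ DR e He) as [d4 [H4 K4]].
  destruct (derive_ctn _ _ _ DU e He) as [d5 [H5 K5]].
  destruct (derive_ctn _ _ _ DC e He) as [d6 [H6 K6]].
  destruct (min6_pos d1 d2 d3 d4 d5 d6) as [d [Hd0 [L1 [L2 [L3 [L4 [L5 L6]]]]]]]; auto.
  exists d; split; auto. intros s Hs. unfold dist_st.
  repeat apply Rmax_lub_lt; [apply K1|apply K2|apply K3|apply K4|apply K5|apply K6]; lra.
Qed.

Lemma Zf_ge p X : admissible p -> basic_R0 p < 1 ->
  wmin p * Rabs (sS X - sv p) <= Zf p X /\ wmin p * Rabs (sE X) <= Zf p X /\
  wmin p * Rabs (sI X) <= Zf p X /\ wmin p * Rabs (sR X) <= Zf p X /\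
  wmin p * Rabs (sU X) <= Zf p X /\ wmin p * Rabs (sC X) <= Zf p X.
Proof.
  intros Hp HR. pose proof (weights_pos p Hp HR) as [W1 [W2 [W3 [W4 [W5 [W6 [W7 _]]]]]]].
  pose proof (wmin_le p) as [V1 [V2 [V3 [V4 [V5 V6]]]]].
  pose proof (Rabs_pos (sS X - sv p)). pose proof (Rabs_pos (sE X)). pose proof (Rabs_pos (sI X)).
  pose proof (Rabs_pos (sR X)). pose proof (Rabs_pos (sU X)). pose proof (Rabs_pos (sC X)).
  assert (0 <= uE p * Rabs (sE X)) by (apply Rmult_le_pos; lra).
  assert (0 <= uI p * Rabs (sI X)) by (apply Rmult_le_pos; lra).
  assert (0 <= uR p * Rabs (sR X)) by (apply Rmult_le_pos; lra).
  assert (0 <= uU p * Rabs (sU X)) by (apply Rmult_le_pos; lra).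
  assert (0 <= al1 p * Rabs (sS X - sv p)) by (apply Rmult_le_pos; lra).
  assert (0 <= al2 p * Rabs (sC X)) by (apply Rmult_le_pos; lra).
  assert (wmin p * Rabs (sS X - sv p) <= al1 p * Rabs (sS X - sv p)) by (apply Rmult_le_compat_r; lra).
  assert (wmin p * Rabs (sE X) <= uE p * Rabs (sE X)) by (apply Rmult_le_compat_r; lra).
  assert (wmin p * Rabs (sI X) <= uI p * Rabs (sI X)) by (apply Rmult_le_compat_r; lra).
  assert (wmin p * Rabs (sR X) <= uR p * Rabs (sR X)) by (apply Rmult_le_compat_r; lra).
  assert (wmin p * Rabs (sU X) <= uU p * Rabs (sU X)) by (apply Rmult_le_compat_r; lra).
  assert (wmin p * Rabs (sC X) <= al2 p * Rabs (sC X)) by (apply Rmult_le_compat_r; lra).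
  unfold Zf. repeat split; lra.
Qed.

Lemma Zf_le p X : admissible p -> basic_R0 p < 1 -> Zf p X <= wmax p * Mf p X.
Proof.
  intros Hp HR. pose proof (weights_pos p Hp HR) as [W1 [W2 [W3 [W4 [W5 [W6 [W7 _]]]]]]].
  unfold Zf, Mf, wmax.
  pose proof (Rabs_pos (sS X - sv p)). pose proof (Rabs_pos (sE X)). pose proof (Rabs_pos (sI X)).
  pose proof (Rabs_pos (sR X)). pose proof (Rabs_pos (sU X)). pose proof (Rabs_pos (sC X)).
  set (w := uE p + uI p + uR p + uU p + al1 p + al2 p).
  assert (uE p * Rabs (sE X) <= w * Rabs (sE X)) by (apply Rmult_le_compat_r; unfold w; lra).
  assert (uI p * Rabs (sI X) <= w * Rabs (sI X)) by (apply Rmult_le_compat_r; unfold w; lra).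
  assert (uR p * Rabs (sR X) <= w * Rabs (sR X)) by (apply Rmult_le_compat_r; unfold w; lra).
  assert (uU p * Rabs (sU X) <= w * Rabs (sU X)) by (apply Rmult_le_compat_r; unfold w; lra).
  assert (al1 p * Rabs (sS X - sv p) <= w * Rabs (sS X - sv p)) by (apply Rmult_le_compat_r; unfold w; lra).
  assert (al2 p * Rabs (sC X) <= w * Rabs (sC X)) by (apply Rmult_le_compat_r; unfold w; lra).
  lra.
Qed.

Lemma Z_rctn p x a : admissible p -> basic_R0 p < 1 -> is_solution p x -> 0 <= a ->
  forall e, 0 < e -> exists d, 0 < d /\ forall s, a <= s < a + d -> Rabs (Zf p (x s) - Zf p (x a)) < e.
Proof.
  intros Hp HR Hs Ha e He. pose proof (weights_pos p Hp HR) as [_ [_ [_ [_ [_ [_ [_ W8]]]]]]].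
  destruct (Req_dec a 0) as [->|Ha0].
  - destruct Hs as [_ Hc]. destruct (Hc (e / wmax p) ltac:(apply Rdiv_lt_0_compat; lra)) as [d [Hd K]].
    exists d; split; auto. intros s Hs'. eapply Rle_lt_trans. apply Zf_lip; auto.
    specialize (K s ltac:(lra)).
    apply Rmult_lt_reg_r with (/ wmax p). apply Rinv_0_lt_compat; lra.
    rewrite (Rmult_comm (wmax p)), Rmult_assoc, Rinv_r by lra. unfold Rdiv in K. lra.
  - destruct (sol_ctn p x a Hs ltac:(lra) (e / wmax p) ltac:(apply Rdiv_lt_0_compat; lra)) as [d [Hd K]].
    exists d; split; auto. intros s Hs'. eapply Rle_lt_trans. apply Zf_lip; auto.
    specialize (K s ltac:(rewrite Rabs_right; lra)).
    apply Rmult_lt_reg_r with (/ wmax p). apply Rinv_0_lt_compat; lra.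
    rewrite (Rmult_comm (wmax p)), Rmult_assoc, Rinv_r by lra. unfold Rdiv in K. lra.
Qed.

Lemma Z_ctn p x t : admissible p -> basic_R0 p < 1 -> is_solution p x -> 0 < t ->
  ctn (fun s => Zf p (x s)) t.
Proof.
  intros Hp HR Hs Ht e He. pose proof (weights_pos p Hp HR) as [_ [_ [_ [_ [_ [_ [_ W8]]]]]]].
  destruct (sol_ctn p x t Hs Ht (e / wmax p) ltac:(apply Rdiv_lt_0_compat; lra)) as [d [Hd K]].
  exists d; split; auto. intros s Hs'. eapply Rle_lt_trans. apply Zf_lip; auto.
  specialize (K s Hs').
  apply Rmult_lt_reg_r with (/ wmax p). apply Rinv_0_lt_compat; lra.
  rewrite (Rmult_comm (wmax p)), Rmult_assoc, Rinv_r by lra. unfold Rdiv in K. lra.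
Qed.

Lemma Z_dec p x a b L : admissible p -> basic_R0 p < 1 -> is_solution p x -> 0 <= a <= b ->
  (forall s, a < s < b -> inball p (x s) (rhoS p) /\ L <= mu p * Mf p (x s)) ->
  Zf p (x b) <= Zf p (x a) - L * (b - a).
Proof.
  intros Hp HR Hs Hab Hin. apply (DM (fun s => Zf p (x s))).
  - lra.
  - intros e He. destruct (Z_rctn p x a Hp HR Hs ltac:(lra) e He) as [d [Hd K]].
    exists d; split; auto. intros s Hs'. specialize (K s Hs'). apply Rabs_def2 in K. lra.
  - intros c Hc. apply Z_ctn; auto. lra.
  - intros s Hs'. destruct (Hin s Hs') as [H1 H2]. eapply DL_mono; [|apply key_stab; auto; lra]. lra.
Qed.

Lemma inball_of_Z p X r : admissible p -> basic_R0 p < 1 -> Zf p X < wmin p * r -> inball p X r.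
Proof.
  intros Hp HR HZ. pose proof (weights_pos p Hp HR) as [_ [_ [_ [_ [_ [_ [W7 _]]]]]]].
  pose proof (Zf_ge p X Hp HR) as [G1 [G2 [G3 [G4 [G5 G6]]]]].
  assert (K : forall m, wmin p * m <= Zf p X -> m < r).
  { intros m Hm. apply Rmult_lt_reg_l with (wmin p); lra. }
  repeat split; apply K; auto.
Qed.

Lemma inball_near p X Y r1 r2 : inball p X r1 -> dist_st Y X < r2 -> inball p Y (r1 + r2).
Proof.
  intros [H1 [H2 [H3 [H4 [H5 H6]]]]] Hd. apply dist_comp in Hd as [D1 [D2 [D3 [D4 [D5 D6]]]]].
  assert (T : forall a b, Rabs a < r1 -> Rabs (b - a) < r2 -> Rabs b < r1 + r2).
  { intros a0 b0 Ha Hb. replace b0 with ((b0 - a0) + a0) by ring.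
    eapply Rle_lt_trans. apply Rabs_triang. lra. }
  repeat split; [| apply (T (sE X)) | apply (T (sI X)) | apply (T (sR X)) | apply (T (sU X)) | apply (T (sC X))]; auto.
  apply (T (sS X - sv p)); auto. replace (sS Y - sv p - (sS X - sv p)) with (sS Y - sS X) by ring; auto.
Qed.

Lemma Mf_inball p X r : inball p X r -> Mf p X < 6 * r.
Proof. intros [H1 [H2 [H3 [H4 [H5 H6]]]]]. unfold Mf. lra. Qed.

Lemma wmin_le_wmax p : admissible p -> basic_R0 p < 1 -> wmin p <= wmax p.
Proof. intros Hp HR. pose proof (weights_pos p Hp HR) as [W1 [W2 [W3 [W4 [W5 [W6 _]]]]]].
  pose proof (wmin_le p) as [V1 _]. unfold wmax. lra. Qed.

Lemma stays p x e' : admissible p -> basic_R0 p < 1 -> is_solution p x -> 0 < e' <= rhoS p ->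
  dist_st (x 0) (E0 p) < e' * wmin p / (12 * wmax p) ->
  forall t, 0 <= t -> inball p (x t) e'.
Proof.
  intros Hp HR Hs He Hd0.
  pose proof (weights_pos p Hp HR) as [_ [_ [_ [_ [_ [_ [W7 W8]]]]]]].
  pose proof (wmin_le_wmax p Hp HR) as Wle.
  set (d := e' * wmin p / (12 * wmax p)) in *.
  assert (Hdpos : 0 < d) by (unfold d; apply Rdiv_lt_0_compat; [apply Rmult_lt_0_compat|]; lra).
  assert (Hde : d * 12 <= e').
  { unfold d. apply Rmult_le_reg_r with (wmax p); auto.
    replace (e' * wmin p / (12 * wmax p) * 12 * wmax p) with (e' * wmin p) by (field; lra).
    apply Rmult_le_compat_l; lra. }
  assert (Hin0 : inball p (x 0) d) by (apply dist_inball; auto).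
  assert (HZ0 : Zf p (x 0) < e' * wmin p / 2).
  { eapply Rle_lt_trans. apply Zf_le; auto.
    apply Rlt_le_trans with (wmax p * (6 * d)). apply Rmult_lt_compat_l; auto. apply Mf_inball; auto.
    unfold d. right. field. lra. }
  apply CI.
  - destruct Hs as [Hd Hc]. destruct (Hc (e'/2) ltac:(lra)) as [d1 [Hd1 K]].
    exists d1; split; auto. intros s Hs'.
    pose proof (inball_near p (x 0) (x s) d (e'/2) Hin0 (K s ltac:(lra))) as HH.
    destruct HH as [H1 [H2 [H3 [H4 [H5 H6]]]]]. repeat split; lra.
  - intros c Hc Hbelow.
    assert (HZc : Zf p (x c) <= Zf p (x 0) - 0 * (c - 0)).
    { apply Z_dec; auto. lra. intros s Hs'. split.
      - destruct (Hbelow s ltac:(lra)) as [H1 [H2 [H3 [H4 [H5 H6]]]]]. repeat split; lra.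
      - pose proof (weights_pos p Hp HR). pose proof (stab_consts p Hp HR) as [_ [_ [_ [_ [_ [_ [_ [Hmu _]]]]]]]].
        assert (0 <= Mf p (x s)) by (unfold Mf; repeat apply Rplus_le_le_0_compat; apply Rabs_pos).
        nra. }
    assert (Hic : inball p (x c) (e'/2)).
    { apply inball_of_Z; auto. lra. }
    destruct (sol_ctn p x c Hs Hc (e'/2) ltac:(lra)) as [d1 [Hd1 K]].
    exists d1; split; auto. intros s Hs'.
    destruct (Rlt_le_dec s c). apply Hbelow; lra.
    pose proof (inball_near p (x c) (x s) (e'/2) (e'/2) Hic (K s ltac:(rewrite Rabs_right; lra))) as HH.
    replace (e' / 2 + e' / 2) with e' in HH by field. exact HH.
Qed.

Lemma Zf_nonneg p X : admissible p -> basic_R0 p < 1 -> 0 <= Zf p X.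
Proof. intros Hp HR. pose proof (Zf_ge p X Hp HR) as [G1 _].
  pose proof (weights_pos p Hp HR) as [_ [_ [_ [_ [_ [_ [W7 _]]]]]]].
  pose proof (Rabs_pos (sS X - sv p)). nra. Qed.

Theorem stable_part p : admissible p -> basic_R0 p < 1 -> locally_asymptotically_stable p (E0 p).
Proof.
  intros Hp HR.
  pose proof (weights_pos p Hp HR) as [_ [_ [_ [_ [_ [_ [W7 W8]]]]]]].
  pose proof (stab_consts p Hp HR) as [_ [_ [_ [_ [_ [_ [_ [Hmu Hrho]]]]]]]].
  split.
  - intros eps He. set (e' := Rmin eps (rhoS p)).
    assert (He' : 0 < e') by (apply Rmin_pos; auto).
    exists (e' * wmin p / (12 * wmax p)). split.
    apply Rdiv_lt_0_compat; [apply Rmult_lt_0_compat|]; lra.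
    intros x Hs Hd0 t Ht. apply Rlt_le_trans with e'; [|apply Rmin_l].
    apply dist_inball. apply (stays p x e'); auto. split; auto. apply Rmin_r.
  - exists (rhoS p * wmin p / (12 * wmax p)). split.
    apply Rdiv_lt_0_compat; [apply Rmult_lt_0_compat|]; lra.
    intros x Hs Hd0 eps He.
    assert (Hst : forall t, 0 <= t -> inball p (x t) (rhoS p)) by (apply (stays p x); auto; lra).
    set (c0 := wmin p * eps).
    assert (Hc0 : 0 < c0) by (unfold c0; nra).
    assert (Ht1 : exists t1, 0 < t1 /\ Zf p (x t1) < c0).
    { apply NNPP. intros Hno.
      assert (Hall : forall t, 0 < t -> c0 <= Zf p (x t)).
      { intros t Ht. apply Rnot_lt_le. intros Hlt. apply Hno. exists t; auto. }
      set (L := mu p * (c0 / wmax p)).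
      assert (HL : 0 < L) by (unfold L; apply Rmult_lt_0_compat; [lra| apply Rdiv_lt_0_compat; lra]).
      set (T := (Zf p (x 0) + 1) / L).
      assert (HT : 0 < T) by (unfold T; apply Rdiv_lt_0_compat; [pose proof (Zf_nonneg p (x 0) Hp HR)|]; lra).
      assert (HZT := Z_dec p x 0 T L Hp HR Hs ltac:(lra)).
      assert (Zf p (x T) <= Zf p (x 0) - L * (T - 0)).
      { apply HZT. intros s Hs'. split. apply Hst; lra.
        unfold L. apply Rmult_le_compat_l; [lra|].
        pose proof (Zf_le p (x s) Hp HR). pose proof (Hall s ltac:(lra)).
        apply Rmult_le_reg_r with (wmax p); auto. unfold Rdiv. rewrite Rmult_assoc, Rinv_l by lra. lra. }
      assert (L * T = Zf p (x 0) + 1) by (unfold T; field; lra).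
      pose proof (Zf_nonneg p (x T) Hp HR). lra. }
    destruct Ht1 as [t1 [Ht1 HZ1]]. exists t1. intros t Ht.
    assert (Zf p (x t) <= Zf p (x t1) - 0 * (t - t1)).
    { apply Z_dec; auto. lra. intros s Hs'. split. apply Hst; lra.
      assert (0 <= Mf p (x s)) by (unfold Mf; repeat apply Rplus_le_le_0_compat; apply Rabs_pos). nra. }
    apply dist_inball. apply inball_of_Z; auto. fold c0. lra.
Qed.

Definition smin p := Lambda p / (beta p + delta p).
Definition ME p := beta p * sv p / theta1 p.
Definition MI p := a p * ME p / theta2 p.
Definition MU p := gamma p * MI p / theta4 p.
Definition MR p := (gamma p * MI p + eta p * MU p) / theta3 p.
Definition MC p := (c1 p * ME p + c2 p * MI p + c3 p * MR p + c4 p * MU p) / delta5 p.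

Definition clamp lo hi x := Rmax lo (Rmin hi x).

Lemma clamp_in lo hi x : lo <= hi -> lo <= clamp lo hi x <= hi.
Proof. intros H. unfold clamp, Rmax, Rmin. destruct (Rle_dec hi x); destruct (Rle_dec lo _); lra. Qed.
Lemma clamp_id lo hi x : lo <= x <= hi -> clamp lo hi x = x.
Proof. intros H. unfold clamp, Rmax, Rmin. destruct (Rle_dec hi x); destruct (Rle_dec lo _); lra. Qed.
Lemma clamp_lo lo hi x : lo <= hi -> x < lo -> clamp lo hi x = lo.
Proof. intros H H'. unfold clamp, Rmax, Rmin. destruct (Rle_dec hi x); destruct (Rle_dec lo _); lra. Qed.
Lemma clamp_hi lo hi x : lo <= hi -> hi < x -> clamp lo hi x = hi.
Proof. intros H H'. unfold clamp, Rmax, Rmin. destruct (Rle_dec hi x); destruct (Rle_dec lo _); lra. Qed.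
Lemma clamp_lip lo hi x y : lo <= hi -> Rabs (clamp lo hi x - clamp lo hi y) <= Rabs (x - y).
Proof. intros H. unfold clamp, Rmax, Rmin.
  destruct (Rle_dec hi x); destruct (Rle_dec hi y); repeat destruct (Rle_dec lo _);
  pose proof (Rle_abs (x - y)); pose proof (Rle_abs (y - x)); rewrite Rabs_minus_sym in H1;
  try (rewrite Rminus_eq_0, Rabs_R0; apply Rabs_pos);
  apply Rabs_le; lra. Qed.

Definition stc p (v : nat -> R) : state :=
  mkState (clamp (smin p) (sv p) (v 0%nat)) (clamp 0 (ME p) (v 1%nat)) (clamp 0 (MI p) (v 2%nat))
          (clamp 0 (MR p) (v 3%nat)) (clamp 0 (MU p) (v 4%nat)) (clamp 0 (MC p) (v 5%nat)).

Definition Gf p (v : nat -> R) (i : nat) : R :=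
  match i with
  | 0%nat => fS p (stc p v) | 1%nat => fE p (stc p v) | 2%nat => fI p (stc p v)
  | 3%nat => fR p (stc p v) | 4%nat => fU p (stc p v) | 5%nat => fC p (stc p v) | _ => 0 end.

Definition inbox p (X : state) :=
  smin p <= sS X <= sv p /\ 0 <= sE X <= ME p /\ 0 <= sI X <= MI p /\
  0 <= sR X <= MR p /\ 0 <= sU X <= MU p /\ 0 <= sC X <= MC p.

Lemma M_pos p : admissible p ->
  0 < smin p /\ smin p <= sv p /\ 0 < ME p /\ 0 < MI p /\ 0 < MU p /\ 0 < MR p /\ 0 < MC p.
Proof.
  intros Hp. pose proof (th_pos p Hp) as [T1 [T2 [T3 T4]]]. pose proof (sv_pos p Hp).
  pose proof Hp as H'. unfold admissible in H'.
  assert (A0 : 0 < smin p) by (unfold smin; apply Rdiv_lt_0_compat; lra).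
  assert (A1 : smin p <= sv p).
  { unfold smin, sv. apply Rmult_le_compat_l; [lra|]. left; apply Rinv_lt_contravar; nra. }
  assert (A2 : 0 < ME p) by (unfold ME; apply Rdiv_lt_0_compat; [apply Rmult_lt_0_compat|]; lra).
  assert (A3 : 0 < MI p) by (unfold MI; apply Rdiv_lt_0_compat; [apply Rmult_lt_0_compat|]; lra).
  assert (A4 : 0 < MU p) by (unfold MU; apply Rdiv_lt_0_compat; [apply Rmult_lt_0_compat|]; lra).
  assert (A5 : 0 < MR p).
  { unfold MR; apply Rdiv_lt_0_compat; [|lra].
    assert (0 < gamma p * MI p) by (apply Rmult_lt_0_compat; lra).
    assert (0 < eta p * MU p) by (apply Rmult_lt_0_compat; lra). lra. }
  repeat split; auto.
  unfold MC; apply Rdiv_lt_0_compat; [|lra].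
  assert (0 < c1 p * ME p) by (apply Rmult_lt_0_compat; lra).
  assert (0 < c2 p * MI p) by (apply Rmult_lt_0_compat; lra).
  assert (0 < c3 p * MR p) by (apply Rmult_lt_0_compat; lra).
  assert (0 < c4 p * MU p) by (apply Rmult_lt_0_compat; lra). lra.
Qed.

Lemma stc_inbox p v : admissible p -> inbox p (stc p v).
Proof.
  intros Hp. pose proof (M_pos p Hp) as [A0 [A1 [A2 [A3 [A4 [A5 A6]]]]]].
  unfold inbox, stc; simpl. repeat split; apply clamp_in; lra.
Qed.

Lemma force_box p X : admissible p -> inbox p X -> 0 <= force p X <= beta p * sS X.
Proof.
  intros Hp [B1 [B2 [B3 [B4 [B5 B6]]]]]. pose proof (M_pos p Hp) as [A0 _].
  pose proof Hp as H'. unfold admissible in H'.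
  unfold force, totalN.
  set (N := sS X + sE X + sI X + sR X + sU X + sC X).
  assert (HN : 0 < N) by (unfold N; lra).
  replace (beta p * sS X / N * (sI X + sU X + sR X)) with (beta p * sS X * ((sI X + sU X + sR X) / N)) by (field; lra).
  assert (0 <= (sI X + sU X + sR X) / N) by (apply Rdiv_le_0_compat; lra).
  assert ((sI X + sU X + sR X) / N <= 1).
  { apply Rmult_le_reg_r with N; auto. unfold Rdiv. rewrite Rmult_assoc, Rinv_l by lra. unfold N; lra. }
  assert (0 <= beta p * sS X) by (apply Rmult_le_pos; lra).
  split. apply Rmult_le_pos; auto. 
  pose proof (Rmult_le_compat_l _ _ _ H1 H0). lra.
Qed.

Definition MJ p := MI p + MU p + MR p.
Definition MN p := sv p + ME p + MI p + MR p + MU p + MC p.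
Definition Lf p := beta p * (MJ p * MN p + sv p * MN p + sv p * MJ p) / (smin p * smin p).

Lemma force_lip p X Y D : admissible p -> inbox p X -> inbox p Y ->
  Rabs (sS X - sS Y) <= D -> Rabs ((sI X + sU X + sR X) - (sI Y + sU Y + sR Y)) <= D ->
  Rabs (totalN X - totalN Y) <= D -> Rabs (force p X - force p Y) <= Lf p * D.
Proof.
  intros Hp BX BY HS HJ HN.
  pose proof (M_pos p Hp) as [A0 [A1 [A2 [A3 [A4 [A5 A6]]]]]].
  pose proof Hp as H'. unfold admissible in H'.
  destruct BX as [X1 [X2 [X3 [X4 [X5 X6]]]]]. destruct BY as [Y1 [Y2 [Y3 [Y4 [Y5 Y6]]]]].
  unfold force, Lf. unfold totalN in *.
  assert (Na0 : smin p <= sS X + sE X + sI X + sR X + sU X + sC X) by lra.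
  assert (Nb0 : smin p <= sS Y + sE Y + sI Y + sR Y + sU Y + sC Y) by lra.
  assert (NaM : sS X + sE X + sI X + sR X + sU X + sC X <= MN p) by (unfold MN; lra).
  assert (NbM : sS Y + sE Y + sI Y + sR Y + sU Y + sC Y <= MN p) by (unfold MN; lra).
  assert (Ja0 : 0 <= sI X + sU X + sR X <= MJ p) by (unfold MJ; lra).
  assert (Jb0 : 0 <= sI Y + sU Y + sR Y <= MJ p) by (unfold MJ; lra).
  set (Na := sS X + sE X + sI X + sR X + sU X + sC X) in *.
  set (Nb := sS Y + sE Y + sI Y + sR Y + sU Y + sC Y) in *.
  set (Ja := sI X + sU X + sR X) in *. set (Jb := sI Y + sU Y + sR Y) in *.
  set (Sa := sS X) in *. set (Sb := sS Y) in *.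
  assert (HD : 0 <= D) by (eapply Rle_trans; [apply Rabs_pos|apply HS]).
  set (num := (Sa - Sb) * Ja * Nb + Sb * (Ja - Jb) * Nb + Sb * Jb * (Nb - Na)).
  replace (beta p * Sa / Na * Ja - beta p * Sb / Nb * Jb) with (beta p * num / (Na * Nb)) by (unfold num; field; lra).
  assert (Hnum : Rabs num <= (MJ p * MN p + sv p * MN p + sv p * MJ p) * D).
  { unfold num. eapply Rle_trans. apply Rabs_triang. eapply Rle_trans. apply Rplus_le_compat_r. apply Rabs_triang.
    rewrite !Rabs_mult. rewrite (Rabs_right Ja), (Rabs_right Nb), (Rabs_right Sb), (Rabs_right Jb) by lra.
    assert (Rabs (Sa - Sb) * Ja <= D * MJ p) by (apply Rmult_le_compat; try lra; apply Rabs_pos).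
    assert (Rabs (Sa - Sb) * Ja * Nb <= D * MJ p * MN p) by (apply Rmult_le_compat; try lra; apply Rmult_le_pos; try lra; apply Rabs_pos).
    assert (Sb * Rabs (Ja - Jb) <= sv p * D) by (apply Rmult_le_compat; try lra; apply Rabs_pos).
    assert (Sb * Rabs (Ja - Jb) * Nb <= sv p * D * MN p) by (apply Rmult_le_compat; try lra; apply Rmult_le_pos; try lra; apply Rabs_pos).
    assert (Sb * Jb <= sv p * MJ p) by (apply Rmult_le_compat; lra).
    assert (Sb * Jb * Rabs (Nb - Na) <= sv p * MJ p * D).
    { apply Rmult_le_compat; try lra. apply Rmult_le_pos; lra. apply Rabs_pos. rewrite Rabs_minus_sym; auto. }
    lra. }
  assert (HNN : smin p * smin p <= Na * Nb) by (apply Rmult_le_compat; lra).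
  assert (Hsp : 0 < smin p * smin p) by (apply Rmult_lt_0_compat; lra).
  unfold Rdiv. rewrite Rabs_mult, Rabs_mult, (Rabs_right (beta p)) by lra.
  rewrite (Rabs_right (/ (Na * Nb))) by (apply Rle_ge; left; apply Rinv_0_lt_compat; lra).
  assert (/ (Na * Nb) <= / (smin p * smin p)) by (apply Rinv_le_contravar; lra).
  assert (0 <= / (Na * Nb)) by (left; apply Rinv_0_lt_compat; lra).
  assert (Rabs num * / (Na * Nb) <= (MJ p * MN p + sv p * MN p + sv p * MJ p) * D * / (smin p * smin p)).
  { apply Rmult_le_compat; auto. apply Rabs_pos. }
  assert (beta p * (Rabs num * / (Na * Nb)) <= beta p * ((MJ p * MN p + sv p * MN p + sv p * MJ p) * D * / (smin p * smin p))).
  { apply Rmult_le_compat_l; lra. }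
  replace (beta p * (MJ p * MN p + sv p * MN p + sv p * MJ p) * / (smin p * smin p) * D) with
    (beta p * ((MJ p * MN p + sv p * MN p + sv p * MJ p) * D * / (smin p * smin p))) by ring.
  rewrite <- Rmult_assoc in H2. rewrite Rmult_assoc. lra.
Qed.

Lemma lin5 k1 k2 k3 k4 k5 a1 a2 a3 a4 a5 D :
  0 <= k1 -> 0 <= k2 -> 0 <= k3 -> 0 <= k4 -> 0 <= k5 ->
  Rabs a1 <= D -> Rabs a2 <= D -> Rabs a3 <= D -> Rabs a4 <= D -> Rabs a5 <= D ->
  Rabs (k1 * a1 + k2 * a2 + k3 * a3 + k4 * a4 + k5 * a5) <= (k1 + k2 + k3 + k4 + k5) * D.
Proof.
  intros. 
  pose proof (Rabs_triang (k1 * a1 + k2 * a2 + k3 * a3 + k4 * a4) (k5 * a5)).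
  pose proof (Rabs_triang (k1 * a1 + k2 * a2 + k3 * a3) (k4 * a4)).
  pose proof (Rabs_triang (k1 * a1 + k2 * a2) (k3 * a3)).
  pose proof (Rabs_triang (k1 * a1) (k2 * a2)).
  rewrite !Rabs_mult in *. rewrite (Rabs_right k1), (Rabs_right k2), (Rabs_right k3), (Rabs_right k4), (Rabs_right k5) in * by lra.
  assert (k1 * Rabs a1 <= k1 * D) by (apply Rmult_le_compat_l; lra).
  assert (k2 * Rabs a2 <= k2 * D) by (apply Rmult_le_compat_l; lra).
  assert (k3 * Rabs a3 <= k3 * D) by (apply Rmult_le_compat_l; lra).
  assert (k4 * Rabs a4 <= k4 * D) by (apply Rmult_le_compat_l; lra).
  assert (k5 * Rabs a5 <= k5 * D) by (apply Rmult_le_compat_l; lra).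
  lra.
Qed.

Definition Lc p := Lf p + delta p + theta1 p + a p + theta2 p + gamma p + theta3 p + eta p + theta4 p +
  c1 p + c2 p + c3 p + c4 p + delta5 p.

Lemma Lf_nonneg p : admissible p -> 0 <= Lf p.
Proof.
  intros Hp. pose proof (M_pos p Hp) as [A0 [A1 [A2 [A3 [A4 [A5 A6]]]]]]. pose proof Hp as H'. unfold admissible in H'.
  unfold Lf, MJ, MN. apply Rdiv_le_0_compat; [|apply Rmult_lt_0_compat; lra].
  apply Rmult_le_pos; [lra|]. repeat apply Rplus_le_le_0_compat; apply Rmult_le_pos; lra.
Qed.

Lemma Gf_lip p : admissible p -> lipG (Gf p) (Lc p) /\ 0 < Lc p.
Proof.
  intros Hp. pose proof (M_pos p Hp) as [A0 [A1 [A2 [A3 [A4 [A5 A6]]]]]]. pose proof Hp as H'. unfold admissible in H'.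
  pose proof (th_pos p Hp) as [T1 [T2 [T3 T4]]]. pose proof (Lf_nonneg p Hp) as HLf.
  assert (HLc : 0 < Lc p) by (unfold Lc; lra). split; auto.
  intros v w i Hi. simpl sum_f_R0.
  set (D := Rabs (v 0%nat - w 0%nat) + Rabs (v 1%nat - w 1%nat) + Rabs (v 2%nat - w 2%nat) + Rabs (v 3%nat - w 3%nat) + Rabs (v 4%nat - w 4%nat) + Rabs (v 5%nat - w 5%nat)).
  pose proof (clamp_lip (smin p) (sv p) (v 0%nat) (w 0%nat) A1) as d0.
  pose proof (clamp_lip 0 (ME p) (v 1%nat) (w 1%nat) ltac:(lra)) as d1.
  pose proof (clamp_lip 0 (MI p) (v 2%nat) (w 2%nat) ltac:(lra)) as d2.
  pose proof (clamp_lip 0 (MR p) (v 3%nat) (w 3%nat) ltac:(lra)) as d3.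
  pose proof (clamp_lip 0 (MU p) (v 4%nat) (w 4%nat) ltac:(lra)) as d4.
  pose proof (clamp_lip 0 (MC p) (v 5%nat) (w 5%nat) ltac:(lra)) as d5.
  pose proof (Rabs_pos (v 0%nat - w 0%nat)). pose proof (Rabs_pos (v 1%nat - w 1%nat)).
  pose proof (Rabs_pos (v 2%nat - w 2%nat)). pose proof (Rabs_pos (v 3%nat - w 3%nat)).
  pose proof (Rabs_pos (v 4%nat - w 4%nat)). pose proof (Rabs_pos (v 5%nat - w 5%nat)).
  assert (HD : 0 <= D) by (unfold D; lra).
  set (X := stc p v). set (Y := stc p w).
  assert (eS : Rabs (sS X - sS Y) <= D) by (unfold X, Y, stc, D; simpl; lra).
  assert (eE : Rabs (sE X - sE Y) <= D) by (unfold X, Y, stc, D; simpl; lra).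
  assert (eI : Rabs (sI X - sI Y) <= D) by (unfold X, Y, stc, D; simpl; lra).
  assert (eR : Rabs (sR X - sR Y) <= D) by (unfold X, Y, stc, D; simpl; lra).
  assert (eU : Rabs (sU X - sU Y) <= D) by (unfold X, Y, stc, D; simpl; lra).
  assert (eC : Rabs (sC X - sC Y) <= D) by (unfold X, Y, stc, D; simpl; lra).
  assert (eJ : Rabs ((sI X + sU X + sR X) - (sI Y + sU Y + sR Y)) <= D).
  { replace ((sI X + sU X + sR X) - (sI Y + sU Y + sR Y)) with ((sI X - sI Y) + (sU X - sU Y) + (sR X - sR Y)) by ring.
    pose proof (Rabs_triang (sI X - sI Y + (sU X - sU Y)) (sR X - sR Y)).
    pose proof (Rabs_triang (sI X - sI Y) (sU X - sU Y)).
    unfold X, Y, stc, D in *; simpl in *. lra. }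
  assert (eN : Rabs (totalN X - totalN Y) <= D).
  { unfold totalN. replace (sS X + sE X + sI X + sR X + sU X + sC X - (sS Y + sE Y + sI Y + sR Y + sU Y + sC Y))
      with ((sS X - sS Y) + (sE X - sE Y) + (sI X - sI Y) + (sR X - sR Y) + (sU X - sU Y) + (sC X - sC Y)) by ring.
    pose proof (Rabs_triang ((sS X - sS Y) + (sE X - sE Y) + (sI X - sI Y) + (sR X - sR Y) + (sU X - sU Y)) (sC X - sC Y)).
    pose proof (Rabs_triang ((sS X - sS Y) + (sE X - sE Y) + (sI X - sI Y) + (sR X - sR Y)) (sU X - sU Y)).
    pose proof (Rabs_triang ((sS X - sS Y) + (sE X - sE Y) + (sI X - sI Y)) (sR X - sR Y)).
    pose proof (Rabs_triang ((sS X - sS Y) + (sE X - sE Y)) (sI X - sI Y)).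
    pose proof (Rabs_triang (sS X - sS Y) (sE X - sE Y)).
    unfold X, Y, stc, D in *; simpl in *. lra. }
  pose proof (force_lip p X Y D Hp (stc_inbox p v Hp) (stc_inbox p w Hp) eS eJ eN) as eF.
  assert (LcD : Lc p * D = Lf p * D + delta p * D + theta1 p * D + a p * D + theta2 p * D + gamma p * D + theta3 p * D + eta p * D + theta4 p * D +
    c1 p * D + c2 p * D + c3 p * D + c4 p * D + delta5 p * D) by (unfold Lc; ring).
  assert (P0 : 0 <= delta p * D) by (apply Rmult_le_pos; lra).
  assert (P1 : 0 <= theta1 p * D) by (apply Rmult_le_pos; lra).
  assert (P2 : 0 <= a p * D) by (apply Rmult_le_pos; lra).
  assert (P3 : 0 <= theta2 p * D) by (apply Rmult_le_pos; lra).
  assert (P4 : 0 <= gamma p * D) by (apply Rmult_le_pos; lra).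
  assert (P5 : 0 <= theta3 p * D) by (apply Rmult_le_pos; lra).
  assert (P6 : 0 <= eta p * D) by (apply Rmult_le_pos; lra).
  assert (P7 : 0 <= theta4 p * D) by (apply Rmult_le_pos; lra).
  assert (P8 : 0 <= c1 p * D) by (apply Rmult_le_pos; lra).
  assert (P9 : 0 <= c2 p * D) by (apply Rmult_le_pos; lra).
  assert (P10 : 0 <= c3 p * D) by (apply Rmult_le_pos; lra).
  assert (P11 : 0 <= c4 p * D) by (apply Rmult_le_pos; lra).
  assert (P12 : 0 <= delta5 p * D) by (apply Rmult_le_pos; lra).
  assert (P13 : 0 <= Lf p * D) by (apply Rmult_le_pos; lra).
  assert (Hz : Rabs 0 <= D) by (rewrite Rabs_R0; lra).
  assert (Hneg : forall u, Rabs u <= D -> Rabs (- u) <= D) by (intros; rewrite Rabs_Ropp; auto).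
  assert (Hq : gamma p * q p <= gamma p) by nra.
  destruct i as [|[|[|[|[|[|i]]]]]]; simpl Gf; fold X Y.
  - unfold fS. replace (Lambda p - force p X - delta p * sS X - (Lambda p - force p Y - delta p * sS Y))
      with (- (force p X - force p Y) + (delta p * (- (sS X - sS Y)) + 0 * 0 + 0 * 0 + 0 * 0 + 0 * 0)) by ring.
    eapply Rle_trans. apply Rabs_triang. rewrite Rabs_Ropp.
    pose proof (lin5 (delta p) 0 0 0 0 _ 0 0 0 0 D ltac:(lra) ltac:(lra) ltac:(lra) ltac:(lra) ltac:(lra) (Hneg _ eS) Hz Hz Hz Hz).
    lra.
  - unfold fE. fold (theta1 p). replace (force p X - theta1 p * sE X - (force p Y - theta1 p * sE Y))
      with ((force p X - force p Y) + (theta1 p * (- (sE X - sE Y)) + 0 * 0 + 0 * 0 + 0 * 0 + 0 * 0)) by ring.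
    eapply Rle_trans. apply Rabs_triang.
    pose proof (lin5 (theta1 p) 0 0 0 0 _ 0 0 0 0 D ltac:(lra) ltac:(lra) ltac:(lra) ltac:(lra) ltac:(lra) (Hneg _ eE) Hz Hz Hz Hz).
    lra.
  - unfold fI. fold (theta2 p). replace (a p * sE X - theta2 p * sI X - (a p * sE Y - theta2 p * sI Y))
      with (a p * (sE X - sE Y) + theta2 p * (- (sI X - sI Y)) + 0 * 0 + 0 * 0 + 0 * 0) by ring.
    pose proof (lin5 (a p) (theta2 p) 0 0 0 _ _ 0 0 0 D ltac:(lra) ltac:(lra) ltac:(lra) ltac:(lra) ltac:(lra) eE (Hneg _ eI) Hz Hz Hz).
    lra.
  - unfold fR. fold (theta3 p). replace (gamma p * q p * sI X - theta3 p * sR X + eta p * sU X - (gamma p * q p * sI Y - theta3 p * sR Y + eta p * sU Y))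
      with (gamma p * q p * (sI X - sI Y) + theta3 p * (- (sR X - sR Y)) + eta p * (sU X - sU Y) + 0 * 0 + 0 * 0) by ring.
    assert (0 <= gamma p * q p) by nra.
    pose proof (lin5 (gamma p * q p) (theta3 p) (eta p) 0 0 _ _ _ 0 0 D ltac:(lra) ltac:(lra) ltac:(lra) ltac:(lra) ltac:(lra) eI (Hneg _ eR) eU Hz Hz).
    assert (gamma p * q p * D <= gamma p * D) by (apply Rmult_le_compat_r; lra).
    lra.
  - unfold fU. replace (gamma p * (1 - q p) * sI X - (delta4 p + c4 p) * sU X - eta p * sU X - (gamma p * (1 - q p) * sI Y - (delta4 p + c4 p) * sU Y - eta p * sU Y))
      with (gamma p * (1 - q p) * (sI X - sI Y) + theta4 p * (- (sU X - sU Y)) + 0 * 0 + 0 * 0 + 0 * 0) by (unfold theta4; ring).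
    assert (0 <= gamma p * (1 - q p)) by nra.
    pose proof (lin5 (gamma p * (1 - q p)) (theta4 p) 0 0 0 _ _ 0 0 0 D ltac:(lra) ltac:(lra) ltac:(lra) ltac:(lra) ltac:(lra) eI (Hneg _ eU) Hz Hz Hz).
    assert (gamma p * (1 - q p) * D <= gamma p * D) by (apply Rmult_le_compat_r; nra).
    lra.
  - unfold fC. replace (c1 p * sE X + c2 p * sI X + c3 p * sR X + c4 p * sU X - delta5 p * sC X - (c1 p * sE Y + c2 p * sI Y + c3 p * sR Y + c4 p * sU Y - delta5 p * sC Y))
      with (c1 p * (sE X - sE Y) + c2 p * (sI X - sI Y) + c3 p * (sR X - sR Y) + c4 p * (sU X - sU Y) + delta5 p * (- (sC X - sC Y))) by ring.
    pose proof (lin5 (c1 p) (c2 p) (c3 p) (c4 p) (delta5 p) _ _ _ _ _ D ltac:(lra) ltac:(lra) ltac:(lra) ltac:(lra) ltac:(lra) eE eI eR eU (Hneg _ eC)).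
    lra.
  - exfalso. lia.
Qed.

Lemma sign_conds p v : admissible p ->
  (v 0%nat < smin p -> 0 <= Gf p v 0) /\ (sv p < v 0%nat -> Gf p v 0 <= 0) /\
  (v 1%nat < 0 -> 0 <= Gf p v 1) /\ (ME p < v 1%nat -> Gf p v 1 <= 0) /\
  (v 2%nat < 0 -> 0 <= Gf p v 2) /\ (MI p < v 2%nat -> Gf p v 2 <= 0) /\
  (v 3%nat < 0 -> 0 <= Gf p v 3) /\ (MR p < v 3%nat -> Gf p v 3 <= 0) /\
  (v 4%nat < 0 -> 0 <= Gf p v 4) /\ (MU p < v 4%nat -> Gf p v 4 <= 0) /\
  (v 5%nat < 0 -> 0 <= Gf p v 5) /\ (MC p < v 5%nat -> Gf p v 5 <= 0).
Proof.
  intros Hp. pose proof (M_pos p Hp) as [A0 [A1 [A2 [A3 [A4 [A5 A6]]]]]]. pose proof Hp as H'. unfold admissible in H'.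
  pose proof (th_pos p Hp) as [T1 [T2 [T3 T4]]].
  pose proof (stc_inbox p v Hp) as B. pose proof (force_box p _ Hp B) as [F1 F2].
  destruct B as [B1 [B2 [B3 [B4 [B5 B6]]]]].
  assert (Esm : (beta p + delta p) * smin p = Lambda p) by (unfold smin; field; lra).
  assert (Esv : delta p * sv p = Lambda p) by (unfold sv; field; lra).
  assert (EME : theta1 p * ME p = beta p * sv p) by (unfold ME; field; lra).
  assert (EMI : theta2 p * MI p = a p * ME p) by (unfold MI; field; lra).
  assert (EMU : theta4 p * MU p = gamma p * MI p) by (unfold MU; field; lra).
  assert (EMR : theta3 p * MR p = gamma p * MI p + eta p * MU p) by (unfold MR; field; lra).
  assert (EMC : delta5 p * MC p = c1 p * ME p + c2 p * MI p + c3 p * MR p + c4 p * MU p) by (unfold MC; field; lra).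
  set (X := stc p v) in *.
  assert (HS : sS X = clamp (smin p) (sv p) (v 0%nat)) by reflexivity.
  assert (HE : sE X = clamp 0 (ME p) (v 1%nat)) by reflexivity.
  assert (HI : sI X = clamp 0 (MI p) (v 2%nat)) by reflexivity.
  assert (HR : sR X = clamp 0 (MR p) (v 3%nat)) by reflexivity.
  assert (HU : sU X = clamp 0 (MU p) (v 4%nat)) by reflexivity.
  assert (HC : sC X = clamp 0 (MC p) (v 5%nat)) by reflexivity.
  simpl Gf. fold X.
  assert (Q1 : gamma p * q p * sI X <= gamma p * MI p).
  { assert (gamma p * q p * sI X <= gamma p * 1 * sI X) by (apply Rmult_le_compat_r; nra). nra. }
  assert (Q2 : gamma p * (1 - q p) * sI X <= gamma p * MI p).
  { assert (gamma p * (1 - q p) * sI X <= gamma p * 1 * sI X) by (apply Rmult_le_compat_r; nra). nra. }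
  assert (Q3 : 0 <= gamma p * q p * sI X) by (apply Rmult_le_pos; nra).
  assert (Q4 : 0 <= gamma p * (1 - q p) * sI X) by (apply Rmult_le_pos; nra).
  assert (Q5 : 0 <= eta p * sU X) by (apply Rmult_le_pos; lra).
  assert (Q6 : eta p * sU X <= eta p * MU p) by (apply Rmult_le_compat_l; lra).
  assert (Q7 : a p * sE X <= a p * ME p) by (apply Rmult_le_compat_l; lra).
  assert (Q8 : 0 <= a p * sE X) by (apply Rmult_le_pos; lra).
  assert (C1 : 0 <= c1 p * sE X <= c1 p * ME p) by (split; [apply Rmult_le_pos|apply Rmult_le_compat_l]; lra).
  assert (C2 : 0 <= c2 p * sI X <= c2 p * MI p) by (split; [apply Rmult_le_pos|apply Rmult_le_compat_l]; lra).
  assert (C3 : 0 <= c3 p * sR X <= c3 p * MR p) by (split; [apply Rmult_le_pos|apply Rmult_le_compat_l]; lra).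
  assert (C4 : 0 <= c4 p * sU X <= c4 p * MU p) by (split; [apply Rmult_le_pos|apply Rmult_le_compat_l]; lra).
  assert (Fs : beta p * sS X <= beta p * sv p) by (apply Rmult_le_compat_l; lra).
  unfold fS, fE, fI, fR, fU, fC. fold (theta1 p) (theta2 p) (theta3 p).
  repeat split; intros Hv.
  - rewrite HS, clamp_lo in * by lra. assert (beta p * smin p + delta p * smin p = Lambda p) by lra. lra.
  - rewrite HS, clamp_hi in * by lra. lra.
  - rewrite HE, clamp_lo by lra. lra.
  - rewrite HE, clamp_hi by lra. lra.
  - rewrite HI, clamp_lo by lra. lra.
  - rewrite HI, clamp_hi by lra. lra.
  - rewrite HR, clamp_lo by lra. lra.
  - rewrite HR, clamp_hi by lra. lra.
  - rewrite HU, clamp_lo in * by lra. unfold theta4 in EMU. lra.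
  - rewrite HU, clamp_hi in * by lra. unfold theta4 in EMU. lra.
  - rewrite HC, clamp_lo by lra. lra.
  - rewrite HC, clamp_hi by lra. lra.
Qed.

Lemma comp_bounds (y g : R -> R) lo hi :
  (forall t, ctn y t) -> (forall t, 0 < t -> is_derive y t (g t)) ->
  (forall t, 0 < t -> y t < lo -> 0 <= g t) -> (forall t, 0 < t -> hi < y t -> g t <= 0) ->
  lo <= y 0 <= hi -> forall t, 0 <= t -> lo <= y t <= hi.
Proof.
  intros Hc Hd Hl Hh H0 t Ht. split.
  - apply (barrier y lo); auto. apply rctn_of_ctn; auto.
    intros s Hs. exists (g s). split; auto. lra.
  - assert (- hi <= - y t); [|lra].
    apply (barrier (fun s => - y s) (- hi)); auto; [| |lra].
    + apply rctn_of_ctn. intros e He. destruct (Hc 0 e He) as [d [Hd0 K]]. exists d; split; auto.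
      intros s Hs. replace (- y s - - y 0) with (- (y s - y 0)) by ring. rewrite Rabs_Ropp. auto.
    + intros s Hs. exists (- g s). split. apply (is_derive_opp y s (g s)); auto.
      intros Hlt. specialize (Hh s Hs ltac:(lra)). lra.
Qed.

Definition x0v p (z : R) (i : nat) : R := match i with 0%nat => sv p | 1%nat => z | _ => 0 end.

Lemma exists_solution p z : admissible p -> 0 < z <= ME p ->
  exists x, is_solution p x /\ x 0 = mkState (sv p) z 0 0 0 0 /\ forall t, 0 <= t -> inbox p (x t).
Proof.
  intros Hp Hz. pose proof (M_pos p Hp) as [A0 [A1 [A2 [A3 [A4 [A5 A6]]]]]].
  destruct (Gf_lip p Hp) as [HL HL0].
  destruct (picard (Gf p) (Lc p) (x0v p z) HL HL0) as [X [HX0 [HXc HXd]]].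
  pose proof (fun v => sign_conds p v Hp) as SC.
  assert (B0 : forall t, 0 <= t -> smin p <= X t 0%nat <= sv p).
  { apply (comp_bounds (fun s => X s 0%nat) (fun s => Gf p (X s) 0)).
    - intros t. apply HXc. lia.
    - intros t Ht. apply HXd; [lra|lia].
    - intros t _ H. exact ((proj1 (SC (X t))) H).
    - intros t _ H. exact ((proj1 (proj2 (SC (X t)))) H).
    - rewrite HX0 by lia. simpl. lra. }
  assert (B1 : forall t, 0 <= t -> 0 <= X t 1%nat <= ME p).
  { apply (comp_bounds (fun s => X s 1%nat) (fun s => Gf p (X s) 1)).
    - intros t. apply HXc. lia.
    - intros t Ht. apply HXd; [lra|lia].
    - intros t _ H. exact ((proj1 (proj2 (proj2 (SC (X t))))) H).
    - intros t _ H. exact ((proj1 (proj2 (proj2 (proj2 (SC (X t)))))) H).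
    - rewrite HX0 by lia. simpl. lra. }
  assert (B2 : forall t, 0 <= t -> 0 <= X t 2%nat <= MI p).
  { apply (comp_bounds (fun s => X s 2%nat) (fun s => Gf p (X s) 2)).
    - intros t. apply HXc. lia.
    - intros t Ht. apply HXd; [lra|lia].
    - intros t _ H. exact ((proj1 (proj2 (proj2 (proj2 (proj2 (SC (X t))))))) H).
    - intros t _ H. exact ((proj1 (proj2 (proj2 (proj2 (proj2 (proj2 (SC (X t)))))))) H).
    - rewrite HX0 by lia. simpl. lra. }
  assert (B3 : forall t, 0 <= t -> 0 <= X t 3%nat <= MR p).
  { apply (comp_bounds (fun s => X s 3%nat) (fun s => Gf p (X s) 3)).
    - intros t. apply HXc. lia.
    - intros t Ht. apply HXd; [lra|lia].
    - intros t _ H. exact ((proj1 (proj2 (proj2 (proj2 (proj2 (proj2 (proj2 (SC (X t))))))))) H).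
    - intros t _ H. exact ((proj1 (proj2 (proj2 (proj2 (proj2 (proj2 (proj2 (proj2 (SC (X t)))))))))) H).
    - rewrite HX0 by lia. simpl. lra. }
  assert (B4 : forall t, 0 <= t -> 0 <= X t 4%nat <= MU p).
  { apply (comp_bounds (fun s => X s 4%nat) (fun s => Gf p (X s) 4)).
    - intros t. apply HXc. lia.
    - intros t Ht. apply HXd; [lra|lia].
    - intros t _ H. exact ((proj1 (proj2 (proj2 (proj2 (proj2 (proj2 (proj2 (proj2 (proj2 (SC (X t))))))))))) H).
    - intros t _ H. exact ((proj1 (proj2 (proj2 (proj2 (proj2 (proj2 (proj2 (proj2 (proj2 (proj2 (SC (X t)))))))))))) H).
    - rewrite HX0 by lia. simpl. lra. }
  assert (B5 : forall t, 0 <= t -> 0 <= X t 5%nat <= MC p).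
  { apply (comp_bounds (fun s => X s 5%nat) (fun s => Gf p (X s) 5)).
    - intros t. apply HXc. lia.
    - intros t Ht. apply HXd; [lra|lia].
    - intros t _ H. exact ((proj1 (proj2 (proj2 (proj2 (proj2 (proj2 (proj2 (proj2 (proj2 (proj2 (proj2 (SC (X t))))))))))))) H).
    - intros t _ H. exact ((proj2 (proj2 (proj2 (proj2 (proj2 (proj2 (proj2 (proj2 (proj2 (proj2 (proj2 (SC (X t))))))))))))) H).
    - rewrite HX0 by lia. simpl. lra. }
  set (x := fun t => mkState (X t 0%nat) (X t 1%nat) (X t 2%nat) (X t 3%nat) (X t 4%nat) (X t 5%nat)).
  assert (Hstc : forall t, 0 <= t -> stc p (X t) = x t).
  { intros t Ht. unfold stc, x. rewrite !clamp_id; auto. }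
  exists x. split; [split|split].
  - intros t Ht. rewrite <- (Hstc t) by lra.
    split; [|split; [|split; [|split; [|split]]]];
    [exact (HXd t 0%nat Ht ltac:(lia))|exact (HXd t 1%nat Ht ltac:(lia))|exact (HXd t 2%nat Ht ltac:(lia))
    |exact (HXd t 3%nat Ht ltac:(lia))|exact (HXd t 4%nat Ht ltac:(lia))|exact (HXd t 5%nat Ht ltac:(lia))].
  - intros e He.
    destruct (HXc 0 0%nat ltac:(lia) e He) as [d1 [H1 K1]].
    destruct (HXc 0 1%nat ltac:(lia) e He) as [d2 [H2 K2]].
    destruct (HXc 0 2%nat ltac:(lia) e He) as [d3 [H3 K3]].
    destruct (HXc 0 3%nat ltac:(lia) e He) as [d4 [H4 K4]].
    destruct (HXc 0 4%nat ltac:(lia) e He) as [d5 [H5 K5]].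
    destruct (HXc 0 5%nat ltac:(lia) e He) as [d6 [H6 K6]].
    destruct (min6_pos d1 d2 d3 d4 d5 d6) as [d [Hd0 [L1 [L2 [L3 [L4 [L5 L6]]]]]]]; auto.
    exists d; split; auto. intros s Hs. unfold dist_st, x; simpl.
    assert (Hs' : Rabs (s - 0) < d) by (rewrite Rminus_0_r, Rabs_right; lra).
    repeat apply Rmax_lub_lt; [apply K1|apply K2|apply K3|apply K4|apply K5|apply K6]; lra.
  - unfold x. rewrite !HX0 by lia. reflexivity.
  - intros t Ht. unfold inbox, x; simpl. repeat split; try apply B0; try apply B1; try apply B2; try apply B3; try apply B4; try apply B5; auto.
Qed.

Lemma deriv_lin4 (f1 f2 f3 f4 : R -> R) k1 k2 k3 k4 t l1 l2 l3 l4 :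
  is_derive f1 t l1 -> is_derive f2 t l2 -> is_derive f3 t l3 -> is_derive f4 t l4 ->
  is_derive (fun s => - (k1 * f1 s + k2 * f2 s + k3 * f3 s + k4 * f4 s)) t (- (k1 * l1 + k2 * l2 + k3 * l3 + k4 * l4)).
Proof.
  intros H1 H2 H3 H4. apply is_derive_Reals in H1, H2, H3, H4. apply is_derive_Reals.
  pose proof (derivable_pt_lim_scal _ k1 _ _ H1) as G1.
  pose proof (derivable_pt_lim_scal _ k2 _ _ H2) as G2.
  pose proof (derivable_pt_lim_scal _ k3 _ _ H3) as G3.
  pose proof (derivable_pt_lim_scal _ k4 _ _ H4) as G4.
  pose proof (derivable_pt_lim_opp _ _ _ (derivable_pt_lim_plus _ _ _ _ _ (derivable_pt_lim_plus _ _ _ _ _ (derivable_pt_lim_plus _ _ _ _ _ G1 G2) G3) G4)) as G.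
  exact G.
Qed.

Definition rhoU p := (1 - kk p) * sv p / (1 + 6 * kk p).
Definition wU p := uE p + uI p + uR p + uU p.
Definition Wf p (X : state) := uE p * sE X + uI p * sI X + uR p * sR X + uU p * sU X.
Definition fW p (X : state) := uE p * fE p X + uI p * fI p X + uR p * fR p X + uU p * fU p X.
Definition mU p := Rmin (beta p * (basic_R0 p - 1) / 4) (theta1 p * (basic_R0 p - 1) / 2).

Lemma kk_prop2 p : admissible p -> 1 < basic_R0 p -> 0 < kk p < 1 /\ uE p * kk p = (3 + basic_R0 p) / 4.
Proof. intros Hp HR. unfold kk, uE. split. split.
  apply Rdiv_lt_0_compat; lra.
  apply Rmult_lt_reg_r with (2 * (1 + basic_R0 p)). lra. unfold Rdiv. rewrite Rmult_assoc, Rinv_l by lra. lra.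
  field. lra. Qed.

Lemma fW_bound p X : admissible p -> 1 < basic_R0 p -> inbox p X -> inball p X (rhoU p) ->
  mU p * (sE X + sI X + sR X + sU X) <= fW p X.
Proof.
  intros Hp HR B Hb.
  pose proof (kk_prop2 p Hp HR) as [Hk HuEk].
  pose proof (u_rel p Hp) as [E1 [E2 [E3 E4]]].
  pose proof (sv_pos p Hp). pose proof (th_pos p Hp) as [T1 _].
  pose proof Hp as H'. unfold admissible in H'.
  destruct B as [B1 [B2 [B3 [B4 [B5 B6]]]]].
  destruct Hb as [H1 [H2 [H3 [H4 [H5 H6]]]]].
  destruct (ratio_ge (sv p) (kk p) (rhoU p) (sS X) (sE X) (sI X) (sR X) (sU X) (sC X) H Hk eq_refl
     ltac:(lra) ltac:(lra) ltac:(lra) ltac:(lra) ltac:(lra) H1 H2 H3 H4 H5 H6) as [HS Hr].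
  set (J := sI X + sU X + sR X).
  assert (Hf : force p X = beta p * (sS X / totalN X) * J) by (unfold force, J; unfold Rdiv; ring).
  assert (HF : beta p * kk p * J <= force p X).
  { rewrite Hf. apply Rmult_le_compat_r. unfold J; lra. apply Rmult_le_compat_l; [lra|]. exact Hr. }
  assert (HE : fW p X = uE p * force p X - beta p * J + theta1 p * (basic_R0 p - uE p) * sE X).
  { unfold fW, fE, fI, fR, fU, J. fold (theta1 p) (theta2 p) (theta3 p).
    replace (uU p * (gamma p * (1 - q p) * sI X - (delta4 p + c4 p) * sU X - eta p * sU X)) with
      (uU p * (gamma p * (1 - q p) * sI X) - theta4 p * uU p * sU X) by (unfold theta4; ring).
    rewrite E2. 
    replace (uE p * (force p X - theta1 p * sE X) + uI p * (a p * sE X - theta2 p * sI X) +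
      uR p * (gamma p * q p * sI X - theta3 p * sR X + eta p * sU X) +
      (uU p * (gamma p * (1 - q p) * sI X) - (beta p + eta p * uR p) * sU X)) with
      (uE p * force p X - theta1 p * uE p * sE X + (a p * uI p) * sE X - (theta2 p * uI p) * sI X
       + uR p * gamma p * q p * sI X - (theta3 p * uR p) * sR X + uU p * gamma p * (1 - q p) * sI X - beta p * sU X) by ring.
    rewrite E4, E3, E1. ring. }
  assert (HuE : uE p * (beta p * kk p * J) = (3 + basic_R0 p) / 4 * beta p * J).
  { replace (uE p * (beta p * kk p * J)) with ((uE p * kk p) * beta p * J) by ring. rewrite HuEk. ring. }
  assert (HuEF : uE p * (beta p * kk p * J) <= uE p * force p X) by (apply Rmult_le_compat_l; [unfold uE; lra|auto]).
  assert (M1 : mU p <= beta p * (basic_R0 p - 1) / 4) by apply Rmin_l.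
  assert (M2 : mU p <= theta1 p * (basic_R0 p - 1) / 2) by apply Rmin_r.
  assert (mU p * sE X <= theta1 p * (basic_R0 p - 1) / 2 * sE X) by (apply Rmult_le_compat_r; lra).
  assert (mU p * J <= beta p * (basic_R0 p - 1) / 4 * J) by (apply Rmult_le_compat_r; unfold J; lra).
  assert (theta1 p * (basic_R0 p - uE p) * sE X = theta1 p * (basic_R0 p - 1) / 2 * sE X) by (unfold uE; field).
  replace (mU p * (sE X + sI X + sR X + sU X)) with (mU p * sE X + mU p * J) by (unfold J; ring).
  rewrite HE. lra.
Qed.

Theorem unstable_part p : admissible p -> 1 < basic_R0 p -> unstable p (E0 p).
Proof.
  intros Hp HR Hst.
  pose proof (kk_prop2 p Hp HR) as [Hk HuEk].
  pose proof (sv_pos p Hp). pose proof (th_pos p Hp) as [T1 _].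
  pose proof (u_pos p Hp) as [UR [UU UI]].
  pose proof Hp as H'. unfold admissible in H'.
  pose proof (M_pos p Hp) as [_ [_ [A2 _]]].
  assert (HuE : 0 < uE p) by (unfold uE; lra).
  assert (Hrho : 0 < rhoU p) by (unfold rhoU; apply Rdiv_lt_0_compat; [apply Rmult_lt_0_compat|]; lra).
  assert (HmU : 0 < mU p).
  { unfold mU. apply Rmin_pos; apply Rdiv_lt_0_compat; try lra; apply Rmult_lt_0_compat; lra. }
  assert (HwU : 0 < wU p) by (unfold wU; lra).
  destruct (Hst (rhoU p) Hrho) as [d [Hd Hstay]].
  set (z := Rmin (d / 2) (ME p)).
  assert (Hz : 0 < z <= ME p) by (split; [apply Rmin_pos; lra|apply Rmin_r]).
  assert (Hzd : z <= d / 2) by apply Rmin_l.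
  destruct (exists_solution p z Hp Hz) as [x [Hs [Hx0 Hbox]]].
  assert (Hd0 : dist_st (x 0) (E0 p) < d).
  { apply dist_inball. rewrite Hx0. unfold inball; simpl. rewrite Rminus_eq_0, Rabs_R0.
    rewrite Rabs_right by lra. repeat split; lra. }
  assert (Hin : forall t, 0 <= t -> inball p (x t) (rhoU p)).
  { intros t Ht. apply dist_inball. apply Hstay; auto. }
  set (W := fun t => Wf p (x t)).
  assert (HW0 : W 0 = uE p * z) by (unfold W, Wf; rewrite Hx0; simpl; ring).
  assert (Hder : forall s, 0 < s -> is_derive (fun t => - W t) s (- fW p (x s))).
  { intros s Hs0. destruct Hs as [Hd' _]. destruct (Hd' s Hs0) as [_ [DE [DI [DR [DU _]]]]].
    apply (deriv_lin4 _ _ _ _ (uE p) (uI p) (uR p) (uU p) s _ _ _ _ DE DI DR DU). }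
  assert (Hrc : rctn (fun t => - W t) 0).
  { intros e He. destruct Hs as [_ Hc]. set (D := e / (2 * wU p)).
    assert (HD : 0 < D) by (unfold D; apply Rdiv_lt_0_compat; lra).
    destruct (Hc D HD) as [d1 [Hd1 K]].
    exists d1; split; auto. intros s Hs'. specialize (K s ltac:(lra)).
    apply dist_comp in K as [_ [K2 [K3 [K4 [K5 _]]]]].
    unfold W, Wf.
    replace (- (uE p * sE (x s) + uI p * sI (x s) + uR p * sR (x s) + uU p * sU (x s)) -
      - (uE p * sE (x 0) + uI p * sI (x 0) + uR p * sR (x 0) + uU p * sU (x 0))) with
      (- (uE p * (sE (x s) - sE (x 0)) + uI p * (sI (x s) - sI (x 0)) + uR p * (sR (x s) - sR (x 0)) + uU p * (sU (x s) - sU (x 0)) + 0 * 0)) by ring.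
    rewrite Rabs_Ropp.
    assert (H0D : Rabs 0 <= D) by (rewrite Rabs_R0; lra).
    assert (Hb := lin5 (uE p) (uI p) (uR p) (uU p) 0 _ _ _ _ 0 D ltac:(lra) ltac:(lra) ltac:(lra) ltac:(lra) ltac:(lra)
      (Rlt_le _ _ K2) (Rlt_le _ _ K3) (Rlt_le _ _ K4) (Rlt_le _ _ K5) H0D).
    replace ((uE p + uI p + uR p + uU p + 0) * D) with (e / 2) in Hb by (unfold D, wU; field; lra).
    lra. }
  assert (Hcomp : forall t, 0 <= t -> W t <= wU p * (sE (x t) + sI (x t) + sR (x t) + sU (x t))).
  { intros t Ht. destruct (Hbox t Ht) as [_ [B2 [B3 [B4 [B5 _]]]]]. unfold W, Wf, wU.
    assert (uE p * sE (x t) <= (uE p + uI p + uR p + uU p) * sE (x t)) by (apply Rmult_le_compat_r; lra).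
    assert (uI p * sI (x t) <= (uE p + uI p + uR p + uU p) * sI (x t)) by (apply Rmult_le_compat_r; lra).
    assert (uR p * sR (x t) <= (uE p + uI p + uR p + uU p) * sR (x t)) by (apply Rmult_le_compat_r; lra).
    assert (uU p * sU (x t) <= (uE p + uI p + uR p + uU p) * sU (x t)) by (apply Rmult_le_compat_r; lra).
    lra. }
  assert (HfW : forall s, 0 < s -> mU p * (sE (x s) + sI (x s) + sR (x s) + sU (x s)) <= fW p (x s)).
  { intros s Hs0. apply fW_bound; auto; [apply Hbox|apply Hin]; lra. }
  assert (Hmono : forall t, 0 <= t -> W 0 <= W t).
  { intros t Ht. assert (- W t <= - W 0 - 0 * (t - 0)); [|lra].
    apply (DM_deriv (fun u => - W u) 0 t 0); auto. intros s Hs'. exists (- fW p (x s)). split. apply Hder; lra.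
    intros _. specialize (HfW s ltac:(lra)). destruct (Hbox s ltac:(lra)) as [_ [B2 [B3 [B4 [B5 _]]]]].
    assert (0 <= mU p * (sE (x s) + sI (x s) + sR (x s) + sU (x s))) by (apply Rmult_le_pos; lra). lra. }
  set (nu := mU p / wU p).
  assert (Hnu : 0 < nu) by (unfold nu; apply Rdiv_lt_0_compat; lra).
  assert (HW0p : 0 < W 0) by (rewrite HW0; apply Rmult_lt_0_compat; lra).
  assert (Hgrow : forall t, 0 <= t -> W 0 + nu * W 0 * t <= W t).
  { intros t Ht. assert (- W t <= - W 0 - nu * W 0 * (t - 0)); [|lra].
    apply (DM_deriv (fun u => - W u) 0 t (nu * W 0)); auto. intros s Hs'. exists (- fW p (x s)). split. apply Hder; lra.
    intros _. specialize (HfW s ltac:(lra)). pose proof (Hcomp s ltac:(lra)). pose proof (Hmono s ltac:(lra)).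
    assert (nu * W 0 <= nu * W s) by (apply Rmult_le_compat_l; lra).
    assert (nu * W s <= mU p * (sE (x s) + sI (x s) + sR (x s) + sU (x s))).
    { unfold nu. apply Rmult_le_reg_r with (wU p); auto.
      replace (mU p / wU p * W s * wU p) with (mU p * W s) by (field; lra).
      replace (mU p * (sE (x s) + sI (x s) + sR (x s) + sU (x s)) * wU p) with (mU p * (wU p * (sE (x s) + sI (x s) + sR (x s) + sU (x s)))) by ring.
      apply Rmult_le_compat_l; lra. }
    lra. }
  set (T := wU p * (4 * rhoU p) / (nu * W 0) + 1).
  assert (HT : 0 <= T).
  { unfold T. assert (0 <= wU p * (4 * rhoU p) / (nu * W 0)); [|lra].
    apply Rdiv_le_0_compat; [apply Rmult_le_pos; lra|apply Rmult_lt_0_compat; lra]. }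
  pose proof (Hgrow T HT).
  destruct (Hin T HT) as [_ [I2 [I3 [I4 [I5 _]]]]].
  destruct (Hbox T HT) as [_ [B2 [B3 [B4 [B5 _]]]]].
  rewrite Rabs_right in I2, I3, I4, I5 by lra.
  pose proof (Hcomp T HT).
  assert (wU p * (sE (x T) + sI (x T) + sR (x T) + sU (x T)) <= wU p * (4 * rhoU p)) by (apply Rmult_le_compat_l; lra).
  assert (nu * W 0 * T = wU p * (4 * rhoU p) + nu * W 0) by (unfold T; field; lra).
  assert (0 < nu * W 0) by (apply Rmult_lt_0_compat; lra).
  lra.
Qed.

Theorem main_thm (p : params) (Hp : admissible p) :
  (basic_R0 p < 1 -> locally_asymptotically_stable p (E0 p)) /\
  (basic_R0 p > 1 -> unstable p (E0 p)).
Proof. split; intros H. apply stable_part; auto. apply unstable_part; auto. Qed.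


Theorem theorem3 (p : params) (Hp : admissible p) :
  (basic_R0 p < 1 -> locally_asymptotically_stable p (E0 p)) /\
  (basic_R0 p > 1 -> unstable p (E0 p)).
Proof. exact (main_thm p Hp). Qed.
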